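(* Let $q$ be a power of $2$. In $\mathrm{AG}(3,q^2)$ with affine coordinates $x,y,z$, homogeneous coordinates $J,X,Y,Z$ and plane at infinity $\Sigma_\infty:J=0$, let $\mathcal H$ be the Hermitian surface $z^q+z=x^{q+1}+y^{q+1}$, let $P_\infty=(0,0,0,1)$, and let $\mathcal Q$ be a hyperbolic quadric with affine equation $z=ax^2+by^2+cxy+dx+ey+f$, $a,\dots,f\in\mathrm{GF}(q^2)$, such that $\mathcal Q\cap\mathcal H\cap\Sigma_\infty=\{P_\infty\}$. Let $\Xi_\infty$ be the quadric of $\mathrm{PG}(3,q)$ defined below. If $\Xi_\infty$ has rank $2$, then $\Xi_\infty$ is a line, i.e. it is the union of two conjugate planes defined over $\mathrm{GF}(q^2)$ but not over $\mathrm{GF}(q)$, whose set of points in $\mathrm{PG}(3,q)$ is a line.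
   Context: Fix $\nu\in\mathrm{GF}(q)\setminus\{1\}$ with absolute trace $\mathrm{Tr}_q(\nu)=\nu+\nu^2+\dots+\nu^{q/2}=1$, and $\varepsilon\in\mathrm{GF}(q^2)\setminus\mathrm{GF}(q)$ with $\varepsilon^2+\varepsilon+\nu=0$. Write each $t\in\mathrm{GF}(q^2)$ as $t=t_0+t_1\varepsilon$ with $t_0,t_1\in\mathrm{GF}(q)$ (so $a=a_0+a_1\varepsilon$, etc.). $\Xi_\infty$ is the quadric of $\mathrm{PG}(3,q)$ in coordinates $(x_0,x_1,y_0,y_1)$ with equation $(a_1+1)x_0^2+x_0x_1+[a_0+(1+\nu)a_1+\nu]x_1^2+(b_1+1)y_0^2+y_0y_1+[b_0+(1+\nu)b_1+\nu]y_1^2+c_1x_0y_0+(c_0+c_1)x_0y_1+(c_0+c_1)x_1y_0+[c_0+(1+\nu)c_1]x_1y_1=0.$ The rank of a quadric is the minimum number of indeterminates appearing in an equation for it under projective changes of coordinates. *)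

(* Defs.v *)
From HB Require Import structures.
From mathcomp Require Import all_boot all_order all_algebra all_field.
Set Implicit Arguments. Unset Strict Implicit. Unset Printing Implicit Defensive.
Import GRing.Theory.
Local Open Scope ring_scope.

(* A quadratic form in n indeterminates w_0..w_{n-1} is represented by a
   matrix A, the form being  Q_A(w) = w A w^T = sum_{i,j} A i j w_i w_j.
   As a *polynomial*, Q_A has coefficient A i i on w_i^2 and coefficient
   A i j + A j i on w_i w_j (i <> j).  Two matrices give the same polynomial
   iff [form_eq] holds (this is polynomial, not functional, equality). *)
Definition form_eq (R : ringType) (n : nat) (A B : 'M[R]_n) : Prop :=
  (forall i, A i i = B i i) /\
  (forall i j, i != j -> A i j + A j i = B i j + B j i).

Definition qform (R : comRingType) (n : nat) (A : 'M[R]_n) (v : 'rV[R]_n) : R :=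
  (v *m A *m v^T) ord0 ord0.

Definition var_appears (R : ringType) (n : nat) (A : 'M[R]_n) (i : 'I_n) : bool :=
  (A i i != 0) || [exists j, (j != i) && (A i j + A j i != 0)].

Definition nvars (R : ringType) (n : nat) (A : 'M[R]_n) : nat :=
  #|[set i | var_appears A i]|.

(* Projective change of coordinates v = w M (M invertible) turns Q_A into
   Q_{M A M^T}.  The rank is the minimum number of indeterminates appearing. *)
Definition qf_rank_is (F : fieldType) (n : nat) (A : 'M[F]_n) (k : nat) : Prop :=
  (exists M : 'M[F]_n, M \in unitmx /\ nvars (M *m A *m M^T) = k) /\
  (forall M : 'M[F]_n, M \in unitmx -> (k <= nvars (M *m A *m M^T))%N).

(* canonical hyperbolic form w0 w1 + w2 w3 *)
Definition hyp_mx (R : ringType) : 'M[R]_4 :=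
  \matrix_(i, j) (if ((nat_of_ord i == 0%N) && (nat_of_ord j == 1%N)) ||
                     ((nat_of_ord i == 2%N) && (nat_of_ord j == 3%N)) then 1 else 0).

Definition hyperbolic_quadric (K : fieldType) (A : 'M[K]_4) : Prop :=
  exists (M : 'M[K]_4) (lam : K),
    M \in unitmx /\ lam != 0 /\ form_eq (M *m A *m M^T) (lam *: hyp_mx K).

Definition pcoord (R : ringType) (v : 'rV[R]_4) (k : nat) : R := v ord0 (inord k).

(* Coordinates (J, X, Y, Z) = indices 0,1,2,3. *)
(* Q : ZJ = aX^2 + bY^2 + cXY + dXJ + eYJ + fJ^2, i.e. the form
   fJ^2 + dJX + eJY - JZ + aX^2 + cXY + bY^2 *)
Definition Q_mx (K : ringType) (a b c d e f : K) : 'M[K]_4 :=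
  \matrix_(i, j)
    (match nat_of_ord i, nat_of_ord j with
     | 0%N, 0%N => f | 0%N, 1%N => d | 0%N, 2%N => e | 0%N, 3%N => -1
     | 1%N, 1%N => a | 1%N, 2%N => c | 2%N, 2%N => b
     | _, _ => 0 end).

Definition herm_eval (K : ringType) (q : nat) (v : 'rV[K]_4) : K :=
  pcoord v 3 ^+ q * pcoord v 0 + pcoord v 3 * pcoord v 0 ^+ q
  - (pcoord v 1 ^+ q.+1 + pcoord v 2 ^+ q.+1).

Definition P_inf (K : ringType) : 'rV[K]_4 := \row_(i < 4) (if nat_of_ord i == 3%N then 1 else 0).

(* Xi_infty in coordinates (x0, x1, y0, y1) = indices 0,1,2,3 *)
Definition Xi_mx (F : ringType) (nu a0 a1 b0 b1 c0 c1 : F) : 'M[F]_4 :=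
  \matrix_(i, j)
    (match nat_of_ord i, nat_of_ord j with
     | 0%N, 0%N => a1 + 1
     | 0%N, 1%N => 1
     | 1%N, 1%N => a0 + (1 + nu) * a1 + nu
     | 2%N, 2%N => b1 + 1
     | 2%N, 3%N => 1
     | 3%N, 3%N => b0 + (1 + nu) * b1 + nu
     | 0%N, 2%N => c1
     | 0%N, 3%N => c0 + c1
     | 1%N, 2%N => c0 + c1
     | 1%N, 3%N => c0 + (1 + nu) * c1
     | _, _ => 0 end).

Definition frob (K : ringType) (q : nat) (L : 'rV[K]_4) : 'rV[K]_4 :=
  map_mx (fun x => x ^+ q) L.

(* The quadric of PG(3,q) with form A, viewed over K = GF(q^2), is (as a
   polynomial, up to a nonzero scalar) the product of a linear form L and its
   conjugate L^q, where the plane L = 0 is not defined over GF(q)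
   (L^q is not proportional to L). *)
Definition conj_planes_pair (F : fieldType) (K : fieldExtType F) (q : nat)
    (A : 'M[F]_4) : Prop :=
  exists (L : 'rV[K]_4) (lam : K),
    lam != 0 /\
    form_eq (map_mx (fun x : F => x%:A) A) (lam *: (L^T *m frob q L)) /\
    ~ (exists mu : K, frob q L = mu *: L).

Definition points_form_line (F : fieldType) (A : 'M[F]_4) : Prop :=
  exists U : 'M[F]_(2, 4),
    \rank U = 2%N /\ forall v : 'rV[F]_4, qform A v = 0 <-> (v <= U)%MS.

(* Main.v *)
Require Import Defs.
From HB Require Import structures.
From mathcomp Require Import all_boot all_order all_algebra all_field.
From mathcomp Require Import ring.
Import GRing.Theory.
Local Open Scope ring_scope.
Notation o0 := (@Ordinal 4 0 isT).
Notation o1 := (@Ordinal 4 1 isT).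
Notation o2 := (@Ordinal 4 2 isT).
Notation o3 := (@Ordinal 4 3 isT).

Lemma sum4 (R : nmodType) (G : 'I_4 -> R) : \sum_(i < 4) G i = G o0 + G o1 + G o2 + G o3.
Proof.
rewrite !big_ord_recl big_ord0 addr0 !addrA.
by congr (_ + _ + _ + _); congr G; apply: val_inj.
Qed.

Lemma qform4 (R : comRingType) (A : 'M[R]_4) v :
  qform A v = \sum_(j < 4) (\sum_(i < 4) v 0 i * A i j) * v 0 j.
Proof. by rewrite /qform !mxE; apply: eq_bigr => j _; rewrite !mxE. Qed.

Lemma polar4 (R : comRingType) (A : 'M[R]_4) (u : 'rV[R]_4) j :
  (u *m (A + A^T)) 0 j = \sum_(i < 4) u 0 i * (A i j + A j i).
Proof. by rewrite !mxE; apply: eq_bigr => i _; rewrite !mxE. Qed.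

Lemma pcoordE (R : ringType) (v : 'rV[R]_4) : 
  [/\ pcoord v 0 = v 0 o0, pcoord v 1 = v 0 o1, pcoord v 2 = v 0 o2 & pcoord v 3 = v 0 o3].
Proof. by rewrite /pcoord; split; congr (v _ _); apply: val_inj; rewrite /= inordK. Qed.

Lemma rank_row (F : fieldType) (A M : 'M[F]_4) k : M \in unitmx ->
  ~~ var_appears (M *m A *m M^T) k -> row k M *m (A + A^T) = 0 /\ qform A (row k M) = 0.
Proof.
move=> uM; rewrite /var_appears negb_or negb_exists => /andP[/negPn/eqP hkk /forallP hj].
set B := M *m A *m M^T in hkk hj.
have hB : B + B^T = M *m (A + A^T) *m M^T.
  by rewrite /B mulmxDr mulmxDl !trmx_mul trmxK mulmxA.
have hq : qform A (row k M) = B k k.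
  rewrite /qform /B -row_mul mxE [in RHS]mxE; apply: eq_bigr => j _.
  by rewrite !mxE.
clearbody B.
have hr : row k (B + B^T) = 0.
  apply/rowP => j; rewrite !mxE.
  case: (eqVneq j k) => [->|njk]; first by rewrite hkk addr0.
  by move: (hj j); rewrite njk /= negbK => /eqP.
split; last by rewrite hq.
have uMt : M^T \in unitmx by rewrite unitmx_tr.
rewrite -(mulmxK uMt (row k M *m (A + A^T))) -2!row_mul -hB hr.
by rewrite mul0mx.
Qed.
Lemma cz0 (R : comRingType) (c2 : (1 + 1 : R) = 0) (x y T : R) :
  x - y = (1 + 1) * T -> x = y.
Proof.
move=>  h; apply/eqP; rewrite -subr_eq0 h  c2 ?mulr0 mul0r ?addr0 //.
Qed.
Lemma cz1 (R : comRingType) (c2 : (1 + 1 : R) = 0) (x y T k1 r1 : R) :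
  r1 = 0 -> x - y = (1 + 1) * T + k1 * r1 -> x = y.
Proof.
move=> h1 h; apply/eqP; rewrite -subr_eq0 h h1 c2 ?mulr0 mul0r ?addr0 //.
Qed.
Lemma cz2 (R : comRingType) (c2 : (1 + 1 : R) = 0) (x y T k1 k2 r1 r2 : R) :
  r1 = 0 -> r2 = 0 -> x - y = (1 + 1) * T + k1 * r1 + k2 * r2 -> x = y.
Proof.
move=> h1 h2 h; apply/eqP; rewrite -subr_eq0 h h1 h2 c2 ?mulr0 mul0r ?addr0 //.
Qed.
Lemma cz3 (R : comRingType) (c2 : (1 + 1 : R) = 0) (x y T k1 k2 k3 r1 r2 r3 : R) :
  r1 = 0 -> r2 = 0 -> r3 = 0 -> x - y = (1 + 1) * T + k1 * r1 + k2 * r2 + k3 * r3 -> x = y.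
Proof.
move=> h1 h2 h3 h; apply/eqP; rewrite -subr_eq0 h h1 h2 h3 c2 ?mulr0 mul0r ?addr0 //.
Qed.
Lemma cz4 (R : comRingType) (c2 : (1 + 1 : R) = 0) (x y T k1 k2 k3 k4 r1 r2 r3 r4 : R) :
  r1 = 0 -> r2 = 0 -> r3 = 0 -> r4 = 0 -> x - y = (1 + 1) * T + k1 * r1 + k2 * r2 + k3 * r3 + k4 * r4 -> x = y.
Proof.
move=> h1 h2 h3 h4 h; apply/eqP; rewrite -subr_eq0 h h1 h2 h3 h4 c2 ?mulr0 mul0r ?addr0 //.
Qed.
Lemma cz5 (R : comRingType) (c2 : (1 + 1 : R) = 0) (x y T k1 k2 k3 k4 k5 r1 r2 r3 r4 r5 : R) :
  r1 = 0 -> r2 = 0 -> r3 = 0 -> r4 = 0 -> r5 = 0 -> x - y = (1 + 1) * T + k1 * r1 + k2 * r2 + k3 * r3 + k4 * r4 + k5 * r5 -> x = y.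
Proof.
move=> h1 h2 h3 h4 h5 h; apply/eqP; rewrite -subr_eq0 h h1 h2 h3 h4 h5 c2 ?mulr0 mul0r ?addr0 //.
Qed.
Lemma cz6 (R : comRingType) (c2 : (1 + 1 : R) = 0) (x y T k1 k2 k3 k4 k5 k6 r1 r2 r3 r4 r5 r6 : R) :
  r1 = 0 -> r2 = 0 -> r3 = 0 -> r4 = 0 -> r5 = 0 -> r6 = 0 -> x - y = (1 + 1) * T + k1 * r1 + k2 * r2 + k3 * r3 + k4 * r4 + k5 * r5 + k6 * r6 -> x = y.
Proof.
move=> h1 h2 h3 h4 h5 h6 h; apply/eqP; rewrite -subr_eq0 h h1 h2 h3 h4 h5 h6 c2 ?mulr0 mul0r ?addr0 //.
Qed.

Section Core.
Variables (F : finFieldType) (K : fieldExtType F) (n : F) (eps : K) (q : nat).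
Variables (a0 a1 b0 b1 c0 c1 : F).
Hypothesis c2 : (1 + 1 : F) = 0.
Hypothesis he : eps ^+ 2 + eps + n%:A = 0.
Hypothesis hepsF : forall x : F, eps != x%:A.
Hypothesis hqF : forall x : F, x ^+ q = x.
Hypothesis hqD : forall x y : K, (x + y) ^+ q = x ^+ q + y ^+ q.
Hypothesis hqe : eps ^+ q = eps + 1.
Hypothesis hnuH : forall m : F, n != m ^+ 2 + m.
Hypothesis hcount : forall x y : F, (forall m, x != m ^+ 2 + m) -> (forall m, y != m ^+ 2 + m) ->
  exists m, x + y = m ^+ 2 + m.

Definition emb (p0 p1 : F) : K := p0%:A + p1%:A * eps.

Lemma inAD (x y : F) : (x + y)%:A = x%:A + y%:A :> K.
Proof. by rewrite scalerDl. Qed.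
Lemma inAM (x y : F) : (x * y)%:A = x%:A * y%:A :> K.
Proof. by rewrite -!in_algE rmorphM. Qed.
Lemma inAN (x : F) : (- x)%:A = - x%:A :> K.
Proof. by rewrite scaleNr. Qed.
Lemma inA1 : (1 : F)%:A = 1 :> K.
Proof. by rewrite scale1r. Qed.

Lemma emb_add p0 p1 r0 r1 : emb p0 p1 + emb r0 r1 = emb (p0 + r0) (p1 + r1).
Proof. rewrite /emb !inAD; ring. Qed.

Lemma eps2 : eps * eps = - eps - n%:A.
Proof. apply/eqP; rewrite -subr_eq0 -he expr2; apply/eqP; ring. Qed.

Lemma emb_mul p0 p1 r0 r1 :
  emb p0 p1 * emb r0 r1 = emb (p0 * r0 - n * p1 * r1) (p0 * r1 + p1 * r0 - p1 * r1).
Proof.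
rewrite /emb !inAD !inAN !inAM.
have -> : (p0%:A + p1%:A * eps) * (r0%:A + r1%:A * eps) =
  p0%:A * r0%:A + (p0%:A * r1%:A + p1%:A * r0%:A) * eps + p1%:A * r1%:A * (eps * eps) by ring.
rewrite eps2; ring.
Qed.

Lemma emb_inj p0 p1 r0 r1 : emb p0 p1 = emb r0 r1 -> p0 = r0 /\ p1 = r1.
Proof.
move=> h.
have h2 : (p0 - r0)%:A + (p1 - r1)%:A * eps = 0.
  have -> : (p0 - r0)%:A + (p1 - r1)%:A * eps = emb p0 p1 - emb r0 r1 :> K.
    by rewrite /emb !inAD !inAN; ring.
  by rewrite h subrr.
have e1 : p1 - r1 = 0.
  apply/eqP; apply/negPn/negP => nz.
  move: (hepsF (- (p0 - r0) / (p1 - r1))); rewrite inAM.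
  have -> : ((p1 - r1)^-1)%:A = ((p1 - r1)%:A)^-1 :> K by rewrite -!in_algE fmorphV.
  have u : (p1 - r1)%:A != 0 :> K by rewrite -in_algE fmorph_eq0.
  have -> : eps = (- (p0 - r0))%:A * ((p1 - r1)%:A)^-1 :> K.
    apply: (mulIf u); rewrite -mulrA mulVf // mulr1 mulrC inAN.
    by apply/eqP; rewrite -addr_eq0 addrC h2.
  by rewrite eqxx.
move: h2; rewrite e1 scale0r mul0r addr0 => /eqP; rewrite -in_algE fmorph_eq0 => /eqP e0.
by split; apply/eqP; rewrite -subr_eq0; apply/eqP.
Qed.

Definition A11 := a0 + (1 + n) * a1 + n.
Definition A33 := b0 + (1 + n) * b1 + n.
Definition qXi (x0 x1 y0 y1 : F) : F :=
  (a1 + 1) * x0 ^+ 2 + x0 * x1 + A11 * x1 ^+ 2 + (b1 + 1) * y0 ^+ 2 + y0 * y1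
  + A33 * y1 ^+ 2 + c1 * x0 * y0 + (c0 + c1) * x0 * y1 + (c0 + c1) * x1 * y0
  + (c0 + (1 + n) * c1) * x1 * y1.
Definition Cx0 (y0 y1 : F) := (c0 + c1) * y0 + (c0 + (1 + n) * c1) * y1.
Definition Cx1 (y0 y1 : F) := c1 * y0 + (c0 + c1) * y1.
Definition Nc := c0 ^+ 2 + c0 * c1 + n * c1 ^+ 2.
Definition Pc := qXi (Cx0 1 0) (Cx1 1 0) 1 0.
Definition Rc := qXi (Cx0 0 1) (Cx1 0 1) 0 1.
Definition Tm (m : F) := m ^+ 2 + m + (a1 + 1) * A11 + n.
Definition Xi := Xi_mx n a0 a1 b0 b1 c0 c1.

Lemma qform_Xi v : qform Xi v = qXi (v 0 o0) (v 0 o1) (v 0 o2) (v 0 o3).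
Proof. rewrite qform4 !sum4 !mxE /= /qXi /A11 /A33; ring. Qed.

Lemma rad_lemma (u : 'rV[F]_4) : u *m (Xi + Xi^T) = 0 ->
  [/\ u 0 o0 + Cx0 (u 0 o2) (u 0 o3) = 0, u 0 o1 + Cx1 (u 0 o2) (u 0 o3) = 0,
      (Nc + 1) * u 0 o2 = 0 & (Nc + 1) * u 0 o3 = 0].
Proof.
move=> hu.
have e j : (u *m (Xi + Xi^T)) 0 j = 0 by rewrite hu mxE.
have e0 := e o0; have e1 := e o1; have e2 := e o2; have e3 := e o3.
rewrite polar4 sum4 !mxE /= in e0; rewrite polar4 sum4 !mxE /= in e1;
rewrite polar4 sum4 !mxE /= in e2; rewrite polar4 sum4 !mxE /= in e3.
move: e0 e1 e2 e3.
set x0 := u 0 o0; set x1 := u 0 o1; set y0 := u 0 o2; set y1 := u 0 o3.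
move=> e0 e1 e2 e3.
have hx1 : x1 + Cx1 y0 y1 = 0 by (try unfold Pc, Rc, Tm, Nc, qXi, Cx0, Cx1, A11, A33 in * ); apply: (@cz1 _ c2 _ _ (((-1) * a1 * x0 + (-1) * x0)) (((1))) _ e0); ring.
have hx0 : x0 + Cx0 y0 y1 = 0 by (try unfold Pc, Rc, Tm, Nc, qXi, Cx0, Cx1, A11, A33 in * ); apply: (@cz2 _ c2 _ _ (((-1) * a0 * x1 + (-1) * a1 * n * x1 + (-1) * a1 * x1 + (-1) * n * x1)) (((1))) (0) _ _ e1 hx1); ring.
have hy0 : (Nc + 1) * y0 = 0 by (try unfold Pc, Rc, Tm, Nc, qXi, Cx0, Cx1, A11, A33 in * ); apply: (@cz3 _ c2 _ _ (((-1) * b0 * y1 + (-1) * b1 * n * y1 + (-1) * b1 * y1 + (-1) * c0 * c1 * n * y1 + (-1) * c0 * c1 * y0 + (-2) * c0 * c1 * y1 + (-1) * c0 * x0 + (-1) * c0 * x1 + (-1) * c0 ^+ 2 * y1 + (-1) * c1 * n * x1 + (-1) * c1 * x0 + (-1) * c1 * x1 + (-1) * c1 ^+ 2 * n * y1 + (-1) * c1 ^+ 2 * y0 + (-1) * c1 ^+ 2 * y1 + (-1) * n * y1)) (((1))) ((c0 + c1)) ((c0 + c1 + c1 * n)) _ _ _ e3 hx0 hx1); ring.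
have hy1 : (Nc + 1) * y1 = 0 by (try unfold Pc, Rc, Tm, Nc, qXi, Cx0, Cx1, A11, A33 in * ); apply: (@cz3 _ c2 _ _ (((-1) * b1 * y0 + (-1) * c0 * c1 * y0 + (-1) * c0 * c1 * y1 + (-1) * c0 * x1 + (-1) * c1 * x0 + (-1) * c1 * x1 + (-1) * c1 ^+ 2 * y0 + (-1) * c1 ^+ 2 * y1 + (-1) * y0)) (((1))) ((c1)) ((c0 + c1)) _ _ _ e2 hx0 hx1); ring.
by split.
Qed.

Lemma emb00 : emb 0 0 = 0.
Proof. by rewrite /emb !scale0r mul0r addr0. Qed.
Lemma embF x : x%:A = emb x 0.
Proof. by rewrite /emb scale0r mul0r addr0. Qed.
Lemma emb_eq p0 p1 r0 r1 : p0 = r0 -> p1 = r1 -> emb p0 p1 = emb r0 r1.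
Proof. by move=> -> ->. Qed.
Lemma expqA (x : F) : (x%:A : K) ^+ q = x%:A.
Proof. by rewrite -in_algE -rmorphXn hqF. Qed.
Lemma emb_frob p0 p1 : emb p0 p1 ^+ q = emb (p0 + p1) p1.
Proof. by rewrite /emb hqD exprMn !expqA hqe inAD; ring. Qed.

Lemma row4_eq0 (R : ringType) (v : 'rV[R]_4) :
  v 0 o0 = 0 -> v 0 o1 = 0 -> v 0 o2 = 0 -> v 0 o3 = 0 -> v = 0.
Proof.
move=> h0 h1 h2 h3; apply/rowP => j; rewrite mxE.
case: j => [[|[|[|[|j]]]] Hj] //.
- by rewrite (_ : Ordinal Hj = o0) //; apply: val_inj.
- by rewrite (_ : Ordinal Hj = o1) //; apply: val_inj.
- by rewrite (_ : Ordinal Hj = o2) //; apply: val_inj.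
- by rewrite (_ : Ordinal Hj = o3) //; apply: val_inj.
Qed.

Lemma lin_entry (R : ringType) (u w : 'rV[R]_4) al be j :
  (al *: u + be *: w) 0 j = al * u 0 j + be * w 0 j.
Proof. by rewrite !mxE. Qed.

Lemma qform_Q (a b c d e f : K) (v : 'rV[K]_4) : qform (Q_mx a b c d e f) v =
  f * v 0 o0 ^+ 2 + d * v 0 o0 * v 0 o1 + e * v 0 o0 * v 0 o2 - v 0 o0 * v 0 o3
  + a * v 0 o1 ^+ 2 + c * v 0 o1 * v 0 o2 + b * v 0 o2 ^+ 2.
Proof. rewrite qform4 !sum4 !mxE /=; ring. Qed.

Lemma split_lemma x0 x1 y0 y1 : qXi x0 x1 y0 y1 =
  qXi (x0 + Cx0 y0 y1) (x1 + Cx1 y0 y1) 0 0 + Pc * y0 ^+ 2 + Rc * y1 ^+ 2 + (Nc + 1) * y0 * y1.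
Proof. (try unfold Pc, Rc, Tm, Nc, qXi, Cx0, Cx1, A11, A33 in * ); apply: (@cz0 _ c2 _ _ (((-1) * a0 * c0 * c1 * y0 * y1 + (-2) * a0 * c0 * c1 * y1 ^+ 2 + (-1) * a0 * c0 * x1 * y1 + (-1) * a0 * c0 ^+ 2 * y1 ^+ 2 + (-1) * a0 * c1 * x1 * y0 + (-1) * a0 * c1 * x1 * y1 + (-1) * a0 * c1 ^+ 2 * y0 * y1 + (-1) * a0 * c1 ^+ 2 * y0 ^+ 2 + (-1) * a0 * c1 ^+ 2 * y1 ^+ 2 + (-2) * a1 * c0 * c1 * n * y0 * y1 + (-4) * a1 * c0 * c1 * n * y1 ^+ 2 + (-3) * a1 * c0 * c1 * y0 * y1 + (-2) * a1 * c0 * c1 * y0 ^+ 2 + (-4) * a1 * c0 * c1 * y1 ^+ 2 + (-1) * a1 * c0 * n * x1 * y1 + (-1) * a1 * c0 * x0 * y0 + (-1) * a1 * c0 * x0 * y1 + (-1) * a1 * c0 * x1 * y1 + (-1) * a1 * c0 ^+ 2 * n * y1 ^+ 2 + (-1) * a1 * c0 ^+ 2 * y0 * y1 + (-1) * a1 * c0 ^+ 2 * y0 ^+ 2 + (-2) * a1 * c0 ^+ 2 * y1 ^+ 2 + (-1) * a1 * c1 * n * x0 * y1 + (-1) * a1 * c1 * n * x1 * y0 + (-1) * a1 * c1 * n * x1 * y1 + (-1) * a1 * c1 * x0 * y0 + (-1) * a1 * c1 * x0 * y1 + (-1) * a1 * c1 * x1 * y0 + (-1) * a1 * c1 * x1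 * y1 + (-2) * a1 * c1 ^+ 2 * n * y0 * y1 + (-1) * a1 * c1 ^+ 2 * n * y0 ^+ 2 + (-3) * a1 * c1 ^+ 2 * n * y1 ^+ 2 + (-1) * a1 * c1 ^+ 2 * n ^+ 2 * y1 ^+ 2 + (-2) * a1 * c1 ^+ 2 * y0 * y1 + (-2) * a1 * c1 ^+ 2 * y0 ^+ 2 + (-2) * a1 * c1 ^+ 2 * y1 ^+ 2 + (-2) * c0 * c1 * n * y0 * y1 + (-6) * c0 * c1 * n * y1 ^+ 2 + (-4) * c0 * c1 * y0 * y1 + (-4) * c0 * c1 * y0 ^+ 2 + (-6) * c0 * c1 * y1 ^+ 2 + (-1) * c0 * n * x1 * y1 + (-1) * c0 * x0 * y0 + (-1) * c0 * x0 * y1 + (-1) * c0 ^+ 2 * n * y1 ^+ 2 + (-2) * c0 ^+ 2 * y0 * y1 + (-1) * c0 ^+ 2 * y0 ^+ 2 + (-3) * c0 ^+ 2 * y1 ^+ 2 + (-1) * c1 * n * x0 * y1 + (-1) * c1 * n * x1 * y0 + (-1) * c1 * n * x1 * y1 + (-1) * c1 * x0 * y0 + (-1) * c1 * x0 * y1 + (-3) * c1 ^+ 2 * n * y0 * y1 + (-1) * c1 ^+ 2 * n * y0 ^+ 2 + (-5) * c1 ^+ 2 * n * y1 ^+ 2 + (-1) * c1 ^+ 2 * n ^+ 2 * y1 ^+ 2 + (-2) * c1 ^+ 2 * y0 * y1 + (-3) * c1 ^+ 2 * y0 ^+ 2 + (-3) * c1 ^+ 2 * y1 ^+ 2))  );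 ring. Qed.

Lemma core (d e f : K) :
  (forall v : 'rV[K]_4, v != 0 -> pcoord v 0 = 0 -> herm_eval q v = 0 ->
     qform (Q_mx (emb a0 a1) (emb b0 b1) (emb c0 c1) d e f) v = 0 -> exists mu : K, v = mu *: P_inf K) ->
  (exists M : 'M[F]_4, M \in unitmx /\ nvars (M *m Xi *m M^T) = 2%N) ->
  conj_planes_pair K q Xi /\ points_form_line Xi.
Proof.
move=> hH [M [uM hnv]].
have [k [l [kl [nk nl]]]] : exists k l, k != l /\ ~~ var_appears (M *m Xi *m M^T) k /\
    ~~ var_appears (M *m Xi *m M^T) l.
  set S := [set i | var_appears (M *m Xi *m M^T) i].
  have hS : #|S| = 2%N by exact: hnv.
  have : #|~: S| = 2%N.
    by have := cardsC S; rewrite hS card_ord => /eqP; rewrite -[4%N]/(2 + 2)%N eqn_add2l => /eqP.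
  move/eqP/cards2P => [k [l [kl hC]]].
  exists k, l; split => //.
  have : k \in ~: S by rewrite hC !inE eqxx.
  have : l \in ~: S by rewrite hC !inE eqxx orbT.
  by rewrite !inE => -> ->.
have [rk qk] := @rank_row _ _ _ _ uM nk.
have [rl ql] := @rank_row _ _ _ _ uM nl.
move: rk qk rl ql; set u := row k M; set w := row l M => rk qk rl ql.
have indep : forall al be : F, al *: u + be *: w = 0 -> al = 0 /\ be = 0.
  move=> al be h.
  pose z : 'rV[F]_4 := al *: delta_mx 0 k + be *: delta_mx 0 l.
  have hz : z *m M = 0 by rewrite mulmxDl -!scalemxAl -!rowE.
  have z0 : z = 0 by rewrite -(mulmxK uM z) hz mul0mx.
  have := congr1 (fun m : 'rV[F]_4 => m 0 k) z0; have := congr1 (fun m : 'rV[F]_4 => m 0 l) z0.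
  rewrite !mxE !eqxx (negbTE kl) eq_sym (negbTE kl) /= !mulr1 !mulr0 addr0 add0r.
  by move=> -> ->.
have [hx0u hx1u hy0u hy1u] := rad_lemma _ rk.
have [hx0w hx1w hy0w hy1w] := rad_lemma _ rl.
rewrite qform_Xi in qk; rewrite qform_Xi in ql.
move: hx0u hx1u hy0u hy1u hx0w hx1w hy0w hy1w qk ql.
set ux0 := u 0 o0; set ux1 := u 0 o1; set uy0 := u 0 o2; set uy1 := u 0 o3.
set wx0 := w 0 o0; set wx1 := w 0 o1; set wy0 := w 0 o2; set wy1 := w 0 o3.
move=> hx0u hx1u hy0u hy1u hx0w hx1w hy0w hy1w qk ql.
have Cx00 : Cx0 0 0 = 0 by rewrite /Cx0 !mulr0 addr0.
have Cx10 : Cx1 0 0 = 0 by rewrite /Cx1 !mulr0 addr0.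
have yu0 : uy0 = 0 -> uy1 = 0 -> False.
  move=> e0 e1.
  have u0 : u = 0.
    by apply: row4_eq0; rewrite -/ux0 -/ux1 -/uy0 -/uy1 ?e0 ?e1 //;
     [move: hx0u; rewrite e0 e1 Cx00 addr0 | move: hx1u; rewrite e0 e1 Cx10 addr0].
  have [] := indep 1 0; first by rewrite u0 scaler0 scale0r addr0.
  by move/eqP; rewrite oner_eq0.
have hN : Nc + 1 = 0.
  apply/eqP/negPn/negP => hN.
  apply: yu0; [move: hy0u | move: hy1u]; by move/eqP; rewrite mulf_eq0 (negbTE hN) => /eqP.
have hPu : Pc * uy0 ^+ 2 + Rc * uy1 ^+ 2 = 0 by (try unfold Pc, Rc, Tm, Nc, qXi, Cx0, Cx1, A11, A33 in * ); apply: (@cz4 _ c2 _ _ (((-1) * a0 * c0 * c1 * uy0 * uy1 + (-1) * a0 * c0 * ux1 * uy1 + (-1) * a0 * c1 * ux1 * uy0 + (-1) * a0 * c1 * ux1 * uy1 + (-1) * a0 * c1 ^+ 2 * uy0 * uy1 + (-1) * a0 * ux1 ^+ 2 + (-2) * a1 * c0 * c1 * n * uy0 * uy1 + (-3) * a1 * c0 * c1 * uy0 * uy1 + (-1) * a1 * c0 * n * ux1 * uy1 + (-1) * a1 * c0 * ux0 * uy0 + (-1) * a1 * c0 * ux0 * uy1 + (-1) * a1 * c0 * ux1 * uy1 + (-1) * a1 * c0 ^+ 2 * uy0 * uy1 + (-1) * a1 * c1 * n * ux0 * uy1 + (-1) * a1 * c1 * n * ux1 * uy0 + (-1) * a1 *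 c1 * n * ux1 * uy1 + (-1) * a1 * c1 * ux0 * uy0 + (-1) * a1 * c1 * ux0 * uy1 + (-1) * a1 * c1 * ux1 * uy0 + (-1) * a1 * c1 * ux1 * uy1 + (-2) * a1 * c1 ^+ 2 * n * uy0 * uy1 + (-2) * a1 * c1 ^+ 2 * uy0 * uy1 + (-1) * a1 * n * ux1 ^+ 2 + (-1) * a1 * ux0 ^+ 2 + (-1) * a1 * ux1 ^+ 2 + (-2) * c0 * c1 * n * uy0 * uy1 + (2) * c0 * c1 * n * uy1 ^+ 2 + (-1) * c0 * c1 * uy0 * uy1 + (2) * c0 * c1 * uy0 ^+ 2 + (4) * c0 * c1 * uy1 ^+ 2 + (-1) * c0 * n * ux1 * uy1 + (-1) * c0 * ux0 * uy0 + (-1) * c0 * ux0 * uy1 + (-1) * c0 * ux1 * uy0 + (-1) * c0 * ux1 * uy1 + (-1) * c0 ^+ 2 * uy0 * uy1 + (2) * c0 ^+ 2 * uy1 ^+ 2 + (-1) * c1 * n * ux0 * uy1 + (-1) * c1 * n * ux1 * uy0 + (-2) * c1 * n * ux1 * uy1 + (-1) * c1 * ux0 * uy0 + (-1) * c1 * ux0 * uy1 + (-1) * c1 * ux1 * uy0 + (-1) * c1 * ux1 * uy1 + (-2) * c1 ^+ 2 * n * uy0 * uy1 + (2) * c1 ^+ 2 * n * uy1 ^+ 2 + (2) * c1 ^+ 2 * uy0 ^+ 2 + (2) * c1 ^+ 2 * uy1 ^+ 2 + (-1) * n * ux1 ^+ 2 + (-1) * ux0 * ux1 + (-1) * ux0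 ^+ 2 + (-1) * uy0 * uy1)) (((1))) ((a1 * c0 * uy0 + a1 * c0 * uy1 + a1 * c1 * n * uy1 + a1 * c1 * uy0 + a1 * c1 * uy1 + a1 * ux0 + c0 * uy0 + c1 * n * uy1 + ux0 + ux1)) ((a0 * c0 * uy1 + a0 * c1 * uy0 + a0 * c1 * uy1 + a0 * ux1 + a1 * c0 * n * uy1 + a1 * c0 * uy1 + a1 * c1 * n * uy0 + a1 * c1 * n * uy1 + a1 * c1 * uy0 + a1 * c1 * uy1 + a1 * n * ux1 + a1 * ux1 + c0 * n * uy1 + c1 * n * uy0 + c1 * n * uy1 + n * ux1)) ((uy0 * uy1)) _ _ _ _ qk hx0u hx1u hN); ring.
have hPw : Pc * wy0 ^+ 2 + Rc * wy1 ^+ 2 = 0 by (try unfold Pc, Rc, Tm, Nc, qXi, Cx0, Cx1, A11, A33 in * ); apply: (@cz4 _ c2 _ _ (((-1) * a0 * c0 * c1 * wy0 * wy1 + (-1) * a0 * c0 * wx1 * wy1 + (-1) * a0 * c1 * wx1 * wy0 + (-1) * a0 * c1 * wx1 * wy1 + (-1) * a0 * c1 ^+ 2 * wy0 * wy1 + (-1) * a0 * wx1 ^+ 2 + (-2) * a1 * c0 * c1 * n * wy0 * wy1 + (-3) * a1 * c0 * c1 * wy0 * wy1 + (-1) * a1 * c0 * n * wx1 * wy1 + (-1) * a1 * c0 * wx0 * wy0 + (-1) * a1 * c0 * wx0 * wy1 + (-1) * a1 * c0 * wx1 * wy1 + (-1) * a1 * c0 ^+ 2 * wy0 * wy1 +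 (-1) * a1 * c1 * n * wx0 * wy1 + (-1) * a1 * c1 * n * wx1 * wy0 + (-1) * a1 * c1 * n * wx1 * wy1 + (-1) * a1 * c1 * wx0 * wy0 + (-1) * a1 * c1 * wx0 * wy1 + (-1) * a1 * c1 * wx1 * wy0 + (-1) * a1 * c1 * wx1 * wy1 + (-2) * a1 * c1 ^+ 2 * n * wy0 * wy1 + (-2) * a1 * c1 ^+ 2 * wy0 * wy1 + (-1) * a1 * n * wx1 ^+ 2 + (-1) * a1 * wx0 ^+ 2 + (-1) * a1 * wx1 ^+ 2 + (-2) * c0 * c1 * n * wy0 * wy1 + (2) * c0 * c1 * n * wy1 ^+ 2 + (-1) * c0 * c1 * wy0 * wy1 + (2) * c0 * c1 * wy0 ^+ 2 + (4) * c0 * c1 * wy1 ^+ 2 + (-1) * c0 * n * wx1 * wy1 + (-1) * c0 * wx0 * wy0 + (-1) * c0 * wx0 * wy1 + (-1) * c0 * wx1 * wy0 + (-1) * c0 * wx1 * wy1 + (-1) * c0 ^+ 2 * wy0 * wy1 + (2) * c0 ^+ 2 * wy1 ^+ 2 + (-1) * c1 * n * wx0 * wy1 + (-1) * c1 * n * wx1 * wy0 + (-2) * c1 * n * wx1 * wy1 + (-1) * c1 * wx0 * wy0 + (-1) * c1 * wx0 * wy1 + (-1) * c1 * wx1 * wy0 + (-1) * c1 * wx1 * wy1 + (-2) * c1 ^+ 2 * n * wy0 * wy1 + (2) * c1 ^+ 2 * n * wy1 ^+ 2 + (2) * c1 ^+ 2 * wy0 ^+ 2 + (2) * c1 ^+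 2 * wy1 ^+ 2 + (-1) * n * wx1 ^+ 2 + (-1) * wx0 * wx1 + (-1) * wx0 ^+ 2 + (-1) * wy0 * wy1)) (((1))) ((a1 * c0 * wy0 + a1 * c0 * wy1 + a1 * c1 * n * wy1 + a1 * c1 * wy0 + a1 * c1 * wy1 + a1 * wx0 + c0 * wy0 + c1 * n * wy1 + wx0 + wx1)) ((a0 * c0 * wy1 + a0 * c1 * wy0 + a0 * c1 * wy1 + a0 * wx1 + a1 * c0 * n * wy1 + a1 * c0 * wy1 + a1 * c1 * n * wy0 + a1 * c1 * n * wy1 + a1 * c1 * wy0 + a1 * c1 * wy1 + a1 * n * wx1 + a1 * wx1 + c0 * n * wy1 + c1 * n * wy0 + c1 * n * wy1 + n * wx1)) ((wy0 * wy1)) _ _ _ _ ql hx0w hx1w hN); ring.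
have hD : uy0 * wy1 + uy1 * wy0 != 0.
  apply/negP => /eqP hD.
  have [e1 e2] : wy1 = 0 /\ uy1 = 0.
    apply: indep; apply: row4_eq0; rewrite !lin_entry -/ux0 -/ux1 -/uy0 -/uy1 -/wx0 -/wx1 -/wy0 -/wy1.
    - (try unfold Pc, Rc, Tm, Nc, qXi, Cx0, Cx1, A11, A33 in * ); apply: (@cz3 _ c2 _ _ (((-1) * c0 * uy0 * wy1 + (-1) * c0 * uy1 * wy0 + (-1) * c0 * uy1 * wy1 + (-1) * c1 * n * uy1 * wy1 + (-1) * c1 * uy0 * wy1 + (-1) * c1 * uy1 * wy0 + (-1) * c1 * uy1 * wy1)) ((c0 + c1)) ((wy1)) ((uy1)) _ _ _ hD hx0u hx0w); ring.
    - (try unfold Pc, Rc, Tm, Nc, qXi, Cx0, Cx1, A11, A33 in * ); apply: (@cz3 _ c2 _ _ (((-1) * c0 * uy1 * wy1 + (-1) * c1 * uy0 * wy1 + (-1) * c1 * uy1 * wy0 + (-1) * c1 * uy1 * wy1)) ((c1)) ((wy1)) ((uy1)) _ _ _ hD hx1u hx1w); ring.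
    - (try unfold Pc, Rc, Tm, Nc, qXi, Cx0, Cx1, A11, A33 in * ); apply: (@cz1 _ c2 _ _ (0) (((1))) _ hD); ring.
    - (try unfold Pc, Rc, Tm, Nc, qXi, Cx0, Cx1, A11, A33 in * ); apply: (@cz0 _ c2 _ _ ((uy1 * wy1))  ); ring.
  have [e3 e4] : wy0 = 0 /\ uy0 = 0.
    apply: indep; apply: row4_eq0; rewrite !lin_entry -/ux0 -/ux1 -/uy0 -/uy1 -/wx0 -/wx1 -/wy0 -/wy1.
    - (try unfold Pc, Rc, Tm, Nc, qXi, Cx0, Cx1, A11, A33 in * ); apply: (@cz3 _ c2 _ _ (((-1) * c0 * uy0 * wy0 + (-1) * c0 * uy0 * wy1 + (-1) * c0 * uy1 * wy0 + (-1) * c1 * n * uy0 * wy1 + (-1) * c1 * n * uy1 * wy0 + (-1) * c1 * uy0 * wy0 + (-1) * c1 * uy0 * wy1 + (-1) * c1 * uy1 * wy0)) ((c0 + c1 + c1 * n)) ((wy0)) ((uy0)) _ _ _ hD hx0u hx0w); ring.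
    - (try unfold Pc, Rc, Tm, Nc, qXi, Cx0, Cx1, A11, A33 in * ); apply: (@cz3 _ c2 _ _ (((-1) * c0 * uy0 * wy1 + (-1) * c0 * uy1 * wy0 + (-1) * c1 * uy0 * wy0 + (-1) * c1 * uy0 * wy1 + (-1) * c1 * uy1 * wy0)) ((c0 + c1)) ((wy0)) ((uy0)) _ _ _ hD hx1u hx1w); ring.
    - (try unfold Pc, Rc, Tm, Nc, qXi, Cx0, Cx1, A11, A33 in * ); apply: (@cz0 _ c2 _ _ ((uy0 * wy0))  ); ring.
    - (try unfold Pc, Rc, Tm, Nc, qXi, Cx0, Cx1, A11, A33 in * ); apply: (@cz1 _ c2 _ _ (0) (((1))) _ hD); ring.
  exact: yu0.
have hPc : Pc = 0.
  have : Pc * (uy0 * wy1 + uy1 * wy0) ^+ 2 = 0 by (try unfold Pc, Rc, Tm, Nc, qXi, Cx0, Cx1, A11, A33 in * ); apply: (@cz2 _ c2 _ _ (((-2) * a0 * c0 * c1 * uy1 ^+ 2 * wy1 ^+ 2 + (-1) * a0 * c0 ^+ 2 * uy1 ^+ 2 * wy1 ^+ 2 + a0 * c1 ^+ 2 * uy0 * uy1 * wy0 * wy1 + (-1) * a0 * c1 ^+ 2 * uy1 ^+ 2 * wy1 ^+ 2 + (-4) * a1 * c0 * c1 * n * uy1 ^+ 2 * wy1 ^+ 2 + (2) * a1 * c0 * c1 * uy0 * uy1 * wy0 * wy1 + (-4) * a1 * c0 * c1 * uy1 ^+ 2 * wy1 ^+ 2 + (-1) * a1 * c0 ^+ 2 *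 n * uy1 ^+ 2 * wy1 ^+ 2 + a1 * c0 ^+ 2 * uy0 * uy1 * wy0 * wy1 + (-2) * a1 * c0 ^+ 2 * uy1 ^+ 2 * wy1 ^+ 2 + a1 * c1 ^+ 2 * n * uy0 * uy1 * wy0 * wy1 + (-3) * a1 * c1 ^+ 2 * n * uy1 ^+ 2 * wy1 ^+ 2 + (-1) * a1 * c1 ^+ 2 * n ^+ 2 * uy1 ^+ 2 * wy1 ^+ 2 + (2) * a1 * c1 ^+ 2 * uy0 * uy1 * wy0 * wy1 + (-2) * a1 * c1 ^+ 2 * uy1 ^+ 2 * wy1 ^+ 2 + (-1) * b0 * uy1 ^+ 2 * wy1 ^+ 2 + (-1) * b1 * n * uy1 ^+ 2 * wy1 ^+ 2 + b1 * uy0 * uy1 * wy0 * wy1 + (-1) * b1 * uy1 ^+ 2 * wy1 ^+ 2 + (-7) * c0 * c1 * n * uy1 ^+ 2 * wy1 ^+ 2 + (5) * c0 * c1 * uy0 * uy1 * wy0 * wy1 + (-8) * c0 * c1 * uy1 ^+ 2 * wy1 ^+ 2 + (-1) * c0 ^+ 2 * n * uy1 ^+ 2 * wy1 ^+ 2 + c0 ^+ 2 * uy0 * uy1 * wy0 * wy1 + (-4) * c0 ^+ 2 * uy1 ^+ 2 * wy1 ^+ 2 + c1 ^+ 2 * n * uy0 * uy1 * wy0 * wy1 + (-6) * c1 ^+ 2 * n * uy1 ^+ 2 * wy1 ^+ 2 + (-1) * c1 ^+ 2 * n ^+ 2 * uy1 ^+ 2 * wy1 ^+ 2 + (4) * c1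 ^+ 2 * uy0 * uy1 * wy0 * wy1 + (-4) * c1 ^+ 2 * uy1 ^+ 2 * wy1 ^+ 2 + (-1) * n * uy1 ^+ 2 * wy1 ^+ 2 + uy0 * uy1 * wy0 * wy1)) ((wy1 ^+ 2)) ((uy1 ^+ 2)) _ _ hPu hPw); ring.
  by move/eqP; rewrite mulf_eq0 expf_eq0 (negbTE hD) andbF orbF => /eqP.
have hRc : Rc = 0.
  have : Rc * (uy0 * wy1 + uy1 * wy0) ^+ 2 = 0 by (try unfold Pc, Rc, Tm, Nc, qXi, Cx0, Cx1, A11, A33 in * ); apply: (@cz2 _ c2 _ _ (((2) * a0 * c0 * c1 * uy0 * uy1 * wy0 * wy1 + a0 * c0 ^+ 2 * uy0 * uy1 * wy0 * wy1 + a0 * c1 ^+ 2 * uy0 * uy1 * wy0 * wy1 + (-1) * a0 * c1 ^+ 2 * uy0 ^+ 2 * wy0 ^+ 2 + (4) * a1 * c0 * c1 * n * uy0 * uy1 * wy0 * wy1 + (4) * a1 * c0 * c1 * uy0 * uy1 * wy0 * wy1 + (-2) * a1 * c0 * c1 * uy0 ^+ 2 * wy0 ^+ 2 + a1 * c0 ^+ 2 * n * uy0 * uy1 * wy0 * wy1 + (2) * a1 * c0 ^+ 2 * uy0 * uy1 * wy0 * wy1 + (-1) * a1 * c0 ^+ 2 * uy0 ^+ 2 * wy0 ^+ 2 + (3) * a1 * c1 ^+ 2 * n * uy0 * uy1 * wy0 * wy1 + (-1) * a1 * c1 ^+ 2 * n * uy0 ^+ 2 * wy0 ^+ 2 + a1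 * c1 ^+ 2 * n ^+ 2 * uy0 * uy1 * wy0 * wy1 + (2) * a1 * c1 ^+ 2 * uy0 * uy1 * wy0 * wy1 + (-2) * a1 * c1 ^+ 2 * uy0 ^+ 2 * wy0 ^+ 2 + b0 * uy0 * uy1 * wy0 * wy1 + b1 * n * uy0 * uy1 * wy0 * wy1 + b1 * uy0 * uy1 * wy0 * wy1 + (-1) * b1 * uy0 ^+ 2 * wy0 ^+ 2 + (7) * c0 * c1 * n * uy0 * uy1 * wy0 * wy1 + (8) * c0 * c1 * uy0 * uy1 * wy0 * wy1 + (-5) * c0 * c1 * uy0 ^+ 2 * wy0 ^+ 2 + c0 ^+ 2 * n * uy0 * uy1 * wy0 * wy1 + (4) * c0 ^+ 2 * uy0 * uy1 * wy0 * wy1 + (-1) * c0 ^+ 2 * uy0 ^+ 2 * wy0 ^+ 2 + (6) * c1 ^+ 2 * n * uy0 * uy1 * wy0 * wy1 + (-1) * c1 ^+ 2 * n * uy0 ^+ 2 * wy0 ^+ 2 + c1 ^+ 2 * n ^+ 2 * uy0 * uy1 * wy0 * wy1 + (4) * c1 ^+ 2 * uy0 * uy1 * wy0 * wy1 + (-4) * c1 ^+ 2 * uy0 ^+ 2 * wy0 ^+ 2 + n * uy0 * uy1 * wy0 * wy1 + (-1) * uy0 ^+ 2 * wy0 ^+ 2)) ((wy0 ^+ 2)) ((uy0 ^+ 2)) _ _ hPu hPw); ring.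
  by move/eqP; rewrite mulf_eq0 expf_eq0 (negbTE hD) andbF orbF => /eqP.

have hc : emb c0 c1 != 0.
  apply/eqP; rewrite -emb00 => /emb_inj [e0 e1].
  by move: hN; rewrite /Nc e0 e1 expr0n /= !mul0r mulr0 !add0r => /eqP; rewrite oner_eq0.
have aniso : forall w0 w1, qXi w0 w1 0 0 = 0 -> w0 = 0 /\ w1 = 0.
  move=> w0 w1 hg.
  case: (eqVneq (emb w0 w1) 0) => [hW|hW]; first by move: hW; rewrite -emb00 => /emb_inj.
  exfalso.
  pose v : 'rV[K]_4 := \row_(i < 4) [:: 0; emb c0 c1 * emb w0 w1; emb w0 w1 ^+ q; 0]`_i.
  have hv1 : v 0 o1 = emb c0 c1 * emb w0 w1 by rewrite mxE.
  have hnz : emb c0 c1 * emb w0 w1 != 0 by rewrite mulf_neq0.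
  have [mu hmu] : exists mu, v = mu *: P_inf K.
    apply: hH.
    - apply/eqP => h; move: (congr1 (fun m : 'rV[K]_4 => m 0 o1) h); rewrite hv1 mxE.
      by move/eqP; rewrite (negbTE hnz).
    - by case: (pcoordE _ v) => -> *; rewrite mxE.
    - have hh : (emb c0 c1 * emb w0 w1) ^+ q.+1 + (emb w0 w1 ^+ q) ^+ q.+1 = 0.
        rewrite !exprSr !emb_mul !emb_frob !emb_mul emb_add -emb00; apply: emb_eq.
        + (try unfold Pc, Rc, Tm, Nc, qXi, Cx0, Cx1, A11, A33 in * ); apply: (@cz1 _ c2 _ _ (((-2) * c0 * c1 * n * w0 * w1 + (-1) * c0 * c1 * w0 * w1 + (-1) * c0 ^+ 2 * n * w1 ^+ 2 + (-1) * c1 ^+ 2 * n * w0 ^+ 2 + (-1) * n * w1 ^+ 2 + w0 * w1 + w1 ^+ 2)) ((n * w1 ^+ 2 + w0 * w1 + w0 ^+ 2)) _ hN); ring.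
        + (try unfold Pc, Rc, Tm, Nc, qXi, Cx0, Cx1, A11, A33 in * ); apply: (@cz1 _ c2 _ _ (((-1) * c0 * c1 * n * w1 ^+ 2 + (-1) * c0 * c1 * w0 * w1 + c0 * c1 * w0 ^+ 2 + c0 ^+ 2 * w0 * w1 + (-1) * c1 ^+ 2 * n * w0 * w1 + c1 ^+ 2 * n * w1 ^+ 2 + w0 * w1 + w1 ^+ 2)) (0) _ hN); ring.
      rewrite /herm_eval; case: (pcoordE _ v) => -> -> -> ->; rewrite !mxE /=.
      by rewrite mulr0 mul0r add0r hh subr0.
    - have hq : emb a0 a1 * (emb c0 c1 * emb w0 w1) ^+ 2 + emb c0 c1 * (emb c0 c1 * emb w0 w1) * emb w0 w1 ^+ q
          + emb b0 b1 * (emb w0 w1 ^+ q) ^+ 2 = 0.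
        rewrite !expr2 !emb_mul !emb_frob !emb_mul !emb_add -emb00; apply: emb_eq.
        + (try unfold Pc, Rc, Tm, Nc, qXi, Cx0, Cx1, A11, A33 in * ); apply: (@cz4 _ c2 _ _ (((-2) * a0 * c0 * c1 * n * w0 * w1 + (-1) * a0 * c0 * c1 * w0 ^+ 2 + (-1) * a0 * c0 * c1 * w1 ^+ 2 + (-1) * a0 * c0 ^+ 2 * n * w1 ^+ 2 + (-1) * a0 * c0 ^+ 2 * w1 ^+ 2 + a0 * c1 ^+ 2 * n * w0 * w1 + (-1) * a0 * c1 ^+ 2 * n * w0 ^+ 2 + (-1) * a0 * c1 ^+ 2 * n * w1 ^+ 2 + (-1) * a0 * c1 ^+ 2 * w0 ^+ 2 + (-1) * a0 * c1 ^+ 2 * w1 ^+ 2 + (2) * a1 * c0 * c1 * n * w0 * w1 + (-4) * a1 * c0 * c1 * n * w0 ^+ 2 + (-6) * a1 * c0 * c1 * n * w1 ^+ 2 + (-2) * a1 * c0 * c1 * n ^+ 2 * w1 ^+ 2 + (-3) * a1 * c0 * c1 * w0 ^+ 2 + (-3) * a1 * c0 * c1 * w1 ^+ 2 + (-1) * a1 * c0 ^+ 2 * n * w0 * w1 + (-1) * a1 * c0 ^+ 2 * n * w0 ^+ 2 + (-2) * a1 * c0 ^+ 2 * n * w1 ^+ 2 + (-1) * a1 * c0 ^+ 2 * n ^+ 2 * w1 ^+ 2 + (-2) * a1 * c0 ^+ 2 * w0 ^+ 2 + (-2) * a1 * c0 ^+ 2 * w1 ^+ 2 + (-1) * a1 *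 c1 ^+ 2 * n * w0 * w1 + (-2) * a1 * c1 ^+ 2 * n * w0 ^+ 2 + (-3) * a1 * c1 ^+ 2 * n * w1 ^+ 2 + a1 * c1 ^+ 2 * n ^+ 2 * w0 * w1 + (-1) * a1 * c1 ^+ 2 * n ^+ 2 * w0 ^+ 2 + (-4) * a1 * c1 ^+ 2 * n ^+ 2 * w1 ^+ 2 + (-1) * a1 * c1 ^+ 2 * n ^+ 3 * w1 ^+ 2 + (-2) * a1 * c1 ^+ 2 * w0 ^+ 2 + (-2) * a1 * c1 ^+ 2 * w1 ^+ 2 + (-1) * b0 * n * w1 ^+ 2 + b0 * w0 * w1 + (-1) * b1 * n * w0 * w1 + (-1) * b1 * n * w0 ^+ 2 + (-2) * b1 * n * w1 ^+ 2 + (-1) * b1 * n ^+ 2 * w1 ^+ 2 + (-1) * b1 * w0 ^+ 2 + (-1) * b1 * w1 ^+ 2 + (-2) * c0 * c1 * n * w0 * w1 + (-6) * c0 * c1 * n * w0 ^+ 2 + (-10) * c0 * c1 * n * w1 ^+ 2 + (-6) * c0 * c1 * n ^+ 2 * w1 ^+ 2 + (-7) * c0 * c1 * w0 ^+ 2 + (-7) * c0 * c1 * w1 ^+ 2 + (-1) * c0 ^+ 2 * n * w0 ^+ 2 + (-4) * c0 ^+ 2 * n * w1 ^+ 2 + (-1) * c0 ^+ 2 * n ^+ 2 * w1 ^+ 2 + (-3) * c0 ^+ 2 * w0 ^+ 2 + (-3) * c0 ^+ 2 * w1 ^+ 2 + c1 ^+ 2 * n * w0 * w1 + (-6) * c1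 ^+ 2 * n * w0 ^+ 2 + (-8) * c1 ^+ 2 * n * w1 ^+ 2 + (-1) * c1 ^+ 2 * n ^+ 2 * w0 ^+ 2 + (-5) * c1 ^+ 2 * n ^+ 2 * w1 ^+ 2 + (-1) * c1 ^+ 2 * n ^+ 3 * w1 ^+ 2 + (-4) * c1 ^+ 2 * w0 ^+ 2 + (-4) * c1 ^+ 2 * w1 ^+ 2 + (-1) * n * w0 ^+ 2 + (-1) * n * w1 ^+ 2 + (-1) * n ^+ 2 * w1 ^+ 2 + (-1) * w0 ^+ 2 + (-1) * w1 ^+ 2)) ((c0 ^+ 2 + (-1) * c1 ^+ 2 * n)) ((n * w1 ^+ 2 + w0 ^+ 2 + w1 ^+ 2)) ((n * w0 ^+ 2 + n * w1 ^+ 2 + n ^+ 2 * w1 ^+ 2 + w0 ^+ 2 + w1 ^+ 2)) ((w0 ^+ 2 + w1 ^+ 2)) _ _ _ _ hg hRc hPc hN); ring.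
        + (try unfold Pc, Rc, Tm, Nc, qXi, Cx0, Cx1, A11, A33 in * ); apply: (@cz4 _ c2 _ _ (((-1) * a0 * c0 * c1 * n * w1 ^+ 2 + (-2) * a0 * c0 * c1 * w0 * w1 + a0 * c0 * c1 * w0 ^+ 2 + (-1) * a0 * c0 * c1 * w1 ^+ 2 + a0 * c0 ^+ 2 * w0 * w1 + (-1) * a0 * c0 ^+ 2 * w1 ^+ 2 + (-1) * a0 * c1 ^+ 2 * n * w0 * w1 + a0 * c1 ^+ 2 * n * w1 ^+ 2 + a0 * c1 ^+ 2 * w0 * w1 + (-1) * a0 * c1 ^+ 2 * w0 ^+ 2 + (-1) * a0 * c1 ^+ 2 * w1 ^+ 2 + (-2) * a1 * c0 * c1 * n * w0 * w1 + (-1) * a1 * c0 * c1 * n * w1 ^+ 2 + (2) * a1 * c0 * c1 * w0 * w1 + (-3) * a1 * c0 * c1 * w0 ^+ 2 + (-5) * a1 * c0 * c1 * w1 ^+ 2 + (-1) * a1 * c0 ^+ 2 * n * w1 ^+ 2 + (-1) * a1 * c0 ^+ 2 * w0 * w1 + (-1) * a1 * c0 ^+ 2 * w1 ^+ 2 + (2) * a1 * c1 ^+ 2 * n * w0 * w1 + (-1) * a1 * c1 ^+ 2 * n * w0 ^+ 2 + (-3) * a1 * c1 ^+ 2 * n * w1 ^+ 2 + (-1) * a1 * c1 ^+ 2 * w0 * w1 + (-1) * a1 * c1 ^+ 2 * w1 ^+ 2 + b0 * w0 * w1 + (-1) * b1 * n * w1 ^+ 2 + (-1) * b1 * w1 ^+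 2 + (-6) * c0 * c1 * n * w1 ^+ 2 + (-2) * c0 * c1 * w0 * w1 + (-3) * c0 * c1 * w0 ^+ 2 + (-7) * c0 * c1 * w1 ^+ 2 + (-1) * c0 ^+ 2 * n * w1 ^+ 2 + c0 ^+ 2 * w0 * w1 + (-1) * c0 ^+ 2 * w0 ^+ 2 + (-3) * c0 ^+ 2 * w1 ^+ 2 + (-1) * c1 ^+ 2 * n * w0 * w1 + (-1) * c1 ^+ 2 * n * w0 ^+ 2 + (-3) * c1 ^+ 2 * n * w1 ^+ 2 + (-1) * c1 ^+ 2 * n ^+ 2 * w1 ^+ 2 + c1 ^+ 2 * w0 * w1 + (-2) * c1 ^+ 2 * w0 ^+ 2 + (-4) * c1 ^+ 2 * w1 ^+ 2 + (-1) * n * w1 ^+ 2 + (-1) * w0 ^+ 2 + (-1) * w1 ^+ 2)) (((2) * c0 * c1 + (-1) * c1 ^+ 2)) ((w1 ^+ 2)) ((w0 ^+ 2 + w1 ^+ 2)) ((n * w1 ^+ 2 + w0 ^+ 2 + w1 ^+ 2)) _ _ _ _ hg hRc hPc hN); ring.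
      apply: (etrans _ hq); rewrite qform_Q !mxE /=; ring.
  move: (congr1 (fun m : 'rV[K]_4 => m 0 o1) hmu); rewrite hv1 !mxE /= mulr0.
  by move/eqP; rewrite (negbTE hnz).

split; last first.
  pose U : 'M[F]_(2, 4) := \matrix_(i < 2, j < 4)
    (if nat_of_ord i == 0%N then [:: Cx0 1 0; Cx1 1 0; 1; 0]`_j else [:: Cx0 0 1; Cx1 0 1; 0; 1]`_j).
  exists U; split.
    apply/eqP; change (row_free U); apply/row_freeP.
    exists (\matrix_(j < 4, i < 2) (if nat_of_ord j == (nat_of_ord i + 2)%N then 1 else 0)).
    apply/matrixP => i j; rewrite !mxE sum4 !mxE.
    case: i => [[|[|i]] Hi] //; case: j => [[|[|j]] Hj] //=; ring.
  move=> v; rewrite qform_Xi.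
  set x0 := v 0 o0; set x1 := v 0 o1; set y0 := v 0 o2; set y1 := v 0 o3.
  split.
    move=> hv.
    have g0 : qXi (x0 + Cx0 y0 y1) (x1 + Cx1 y0 y1) 0 0 = 0 by (try unfold Pc, Rc, Tm, Nc, qXi, Cx0, Cx1, A11, A33 in * ); apply: (@cz4 _ c2 _ _ ((a0 * c0 * c1 * y0 * y1 + a0 * c0 * x1 * y1 + a0 * c1 * x1 * y0 + a0 * c1 * x1 * y1 + a0 * c1 ^+ 2 * y0 * y1 + (2) * a1 * c0 * c1 * n * y0 * y1 + (3) * a1 * c0 * c1 * y0 * y1 + a1 * c0 * n * x1 * y1 + a1 * c0 * x0 * y0 + a1 * c0 * x0 * y1 + a1 * c0 * x1 * y1 + a1 * c0 ^+ 2 * y0 * y1 + a1 * c1 * n * x0 * y1 + a1 * c1 * n * x1 * y0 + a1 * c1 * n * x1 * y1 + a1 * c1 * x0 * y0 + a1 * c1 * x0 * y1 + a1 * c1 * x1 * y0 + a1 * c1 * x1 * y1 + (2) * a1 * c1 ^+ 2 * n * y0 * y1 + (2) * a1 * c1 ^+ 2 * y0 * y1 + (-1) * b0 * y1 ^+ 2 + (-1) * b1 * n * y1 ^+ 2 + (-1) * b1 * y0 ^+ 2 + (-1) * b1 * y1 ^+ 2 + (2) * c0 * c1 * n * y0 * y1 + (-1) * c0 * c1 * n * y1 ^+ 2 + (3) * c0 * c1 * y0 * y1 + (-1) * c0 * c1 * y0 ^+ 2 + (-2) * c0 * c1 * y1 ^+ 2 + c0 * n * x1 * y1 + c0 * x0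 * y0 + c0 * x0 * y1 + c0 ^+ 2 * y0 * y1 + (-1) * c0 ^+ 2 * y1 ^+ 2 + c1 * n * x0 * y1 + c1 * n * x1 * y0 + c1 * n * x1 * y1 + c1 * x0 * y0 + c1 * x0 * y1 + (2) * c1 ^+ 2 * n * y0 * y1 + (-1) * c1 ^+ 2 * n * y1 ^+ 2 + (2) * c1 ^+ 2 * y0 * y1 + (-1) * c1 ^+ 2 * y0 ^+ 2 + (-1) * c1 ^+ 2 * y1 ^+ 2 + (-1) * n * y1 ^+ 2 + (-1) * y0 * y1 + (-1) * y0 ^+ 2)) (((1))) ((y1 ^+ 2)) ((y0 ^+ 2)) ((y0 * y1)) _ _ _ _ hv hRc hPc hN); ring.
    have [e0 e1] := aniso _ _ g0.
    apply/submxP; exists (\row_(i < 2) [:: y0; y1]`_i).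
    apply/rowP => j; rewrite !mxE big_ord_recl big_ord1 !mxE /=.
    case: j => [[|[|[|[|j]]]] Hj] //=.
    - rewrite (_ : Ordinal Hj = o0); last exact: val_inj.
      rewrite -/x0. (try unfold Pc, Rc, Tm, Nc, qXi, Cx0, Cx1, A11, A33 in * ); apply: (@cz1 _ c2 _ _ (((-1) * c0 * y0 + (-1) * c0 * y1 + (-1) * c1 * n * y1 + (-1) * c1 * y0 + (-1) * c1 * y1)) (((1))) _ e0); ring.
    - rewrite (_ : Ordinal Hj = o1); last exact: val_inj.
      rewrite -/x1. (try unfold Pc, Rc, Tm, Nc, qXi, Cx0, Cx1, A11, A33 in * ); apply: (@cz1 _ c2 _ _ (((-1) * c0 * y1 + (-1) * c1 * y0 + (-1) * c1 * y1)) (((1))) _ e1); ring.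
    - rewrite (_ : Ordinal Hj = o2); last exact: val_inj.
      rewrite -/y0. (try unfold Pc, Rc, Tm, Nc, qXi, Cx0, Cx1, A11, A33 in * ); apply: (@cz0 _ c2 _ _ (0)  ); ring.
    - rewrite (_ : Ordinal Hj = o3); last exact: val_inj.
      rewrite -/y1. (try unfold Pc, Rc, Tm, Nc, qXi, Cx0, Cx1, A11, A33 in * ); apply: (@cz0 _ c2 _ _ (0)  ); ring.
  case/submxP => z hz.
  rewrite /x0 /x1 /y0 /y1 hz !mxE !big_ord_recl !big_ord0 !mxE /=.
  set z0 := z 0 ord0; set z1 := z 0 (lift ord0 ord0).
  (try unfold Pc, Rc, Tm, Nc, qXi, Cx0, Cx1, A11, A33 in * ); apply: (@cz3 _ c2 _ _ ((a0 * c0 * c1 * z0 * z1 + a0 * c1 ^+ 2 * z0 * z1 + (2) * a1 * c0 * c1 * n * z0 * z1 + (3) * a1 * c0 * c1 * z0 * z1 + a1 * c0 ^+ 2 * z0 * z1 + (2) * a1 * c1 ^+ 2 * n * z0 * z1 + (2) * a1 * c1 ^+ 2 * z0 * z1 + (2) * c0 * c1 * n * z0 * z1 + (6) * c0 * c1 * z0 * z1 + (2) * c0 ^+ 2 * z0 * z1 + (3) * c1 ^+ 2 * n * z0 * z1 + (4) * c1 ^+ 2 * z0 * z1)) ((z1 ^+ 2)) ((z0 ^+ 2)) ((z0 * z1)) _ _ _ hRc hPc hN); ring.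
have hA0 : a1 + 1 != 0.
  apply/eqP => h0.
  have [] : (1 : F) = 0 /\ (0 : F) = 0 by apply: aniso; (try unfold Pc, Rc, Tm, Nc, qXi, Cx0, Cx1, A11, A33 in * ); apply: (@cz1 _ c2 _ _ (0) (((1))) _ h0); ring.
  by move/eqP; rewrite oner_eq0.
have hag : forall m, (a1 + 1) * A11 != m ^+ 2 + m.
  move=> m; apply/eqP => hm.
  have hm' : (a1 + 1) * A11 - (m ^+ 2 + m) = 0 by rewrite hm subrr.
  have [_ e1] : m = 0 /\ a1 + 1 = 0 by apply: aniso; (try unfold Pc, Rc, Tm, Nc, qXi, Cx0, Cx1, A11, A33 in * ); apply: (@cz1 _ c2 _ _ ((a1 * m + a1 * m ^+ 2 + m + m ^+ 2)) (((1) + a1)) _ hm'); ring.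
  by move: hA0; rewrite e1 eqxx.
have [m hm] := hcount _ _ hag hnuH.
have hT : Tm m = 0.
  have hm' : (a1 + 1) * A11 + n - (m ^+ 2 + m) = 0 by rewrite hm subrr.
  (try unfold Pc, Rc, Tm, Nc, qXi, Cx0, Cx1, A11, A33 in * ); apply: (@cz1 _ c2 _ _ ((m + m ^+ 2)) (((1))) _ hm'); ring.
have hA : (a1 + 1)%:A != 0 :> K by rewrite -in_algE fmorph_eq0.
have hlam : (a1 + 1)%:A * ((a1 + 1)^-1)%:A = 1 :> K by rewrite -inAM divff // scale1r.
pose t := emb m 1.
pose L : 'rV[K]_4 := \row_(j < 4) [:: (a1 + 1)%:A; t; ((a1 + 1) * (c0 + c1))%:A + t * c1%:A;
   ((a1 + 1) * (c0 + (1 + n) * c1))%:A + t * (c0 + c1)%:A]`_j.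
exists L, ((a1 + 1)^-1)%:A; split; first by rewrite -in_algE fmorph_eq0 invr_eq0.
split; last first.
  case=> mu hmu.
  have h0 := congr1 (fun x : 'rV[K]_4 => x 0 o0) hmu.
  have h1 := congr1 (fun x : 'rV[K]_4 => x 0 o1) hmu.
  rewrite /frob !mxE /= expqA in h0; rewrite /frob !mxE /= in h1.
  have mu1 : mu = 1 by apply: (mulIf hA); rewrite mul1r -h0.
  move: h1; rewrite mu1 mul1r /t emb_frob => /emb_inj [em _].
  have : (1 : F) = (m + 1) - m by ring.
  by rewrite em subrr => /eqP; rewrite oner_eq0.
have fe : forall i j, (((a1 + 1)^-1)%:A *: (L^T *m frob q L)) i j = ((a1 + 1)^-1)%:A * (L 0 i * (L 0 j) ^+ q).
  by move=> i j; rewrite !mxE big_ord1 !mxE.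
split.
  move=> i; rewrite fe !mxE.
  case: i => [[|[|[|[|i]]]] Hi] //=.
    - apply: (mulfI hA); rewrite !mulrA hlam !mul1r /t !embF.
      do 4 rewrite ?emb_mul ?emb_add ?emb_frob.
      apply: emb_eq; [(try unfold Pc, Rc, Tm, Nc, qXi, Cx0, Cx1, A11, A33 in * ); apply: (@cz4 _ c2 _ _ (0) (0) (0) (0) (0) _ _ _ _ hRc hPc hN hT); ring | (try unfold Pc, Rc, Tm, Nc, qXi, Cx0, Cx1, A11, A33 in * ); apply: (@cz4 _ c2 _ _ (0) (0) (0) (0) (0) _ _ _ _ hRc hPc hN hT); ring].
    - apply: (mulfI hA); rewrite !mulrA hlam !mul1r /t !embF.
      do 4 rewrite ?emb_mul ?emb_add ?emb_frob.
      apply: emb_eq; [(try unfold Pc, Rc, Tm, Nc, qXi, Cx0, Cx1, A11, A33 in * ); apply: (@cz4 _ c2 _ _ (((-1) * m + (-1) * m ^+ 2)) (0) (0) (0) (((1))) _ _ _ _ hRc hPc hN hT); ring | (try unfold Pc, Rc, Tm, Nc, qXi, Cx0, Cx1, A11, A33 in * ); apply: (@cz4 _ c2 _ _ (((-1) * m)) (0) (0) (0) (0) _ _ _ _ hRc hPc hN hT); ring].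
    - apply: (mulfI hA); rewrite !mulrA hlam !mul1r /t !embF.
      do 4 rewrite ?emb_mul ?emb_add ?emb_frob.
      apply: emb_eq; [(try unfold Pc, Rc, Tm, Nc, qXi, Cx0, Cx1, A11, A33 in * ); apply: (@cz4 _ c2 _ _ (((-1) * a0 * a1 * c1 ^+ 2 + (-1) * a0 * c1 ^+ 2 + (-6) * a1 * c0 * c1 + (-1) * a1 * c0 * c1 * m + (-2) * a1 * c0 ^+ 2 + (-5) * a1 * c1 ^+ 2 + (-1) * a1 * c1 ^+ 2 * m + (-2) * a1 * c1 ^+ 2 * n + (-2) * a1 ^+ 2 * c0 * c1 + (-1) * a1 ^+ 2 * c0 ^+ 2 + (-2) * a1 ^+ 2 * c1 ^+ 2 + (-1) * a1 ^+ 2 * c1 ^+ 2 * n + (-4) * c0 * c1 + (-1) * c0 * c1 * m + (-1) * c0 ^+ 2 + (-3) * c1 ^+ 2 + (-2) * c1 ^+ 2 * m + (-1) * c1 ^+ 2 * m ^+ 2 + (-1) * c1 ^+ 2 * n)) (0) (((1) + a1)) (0) ((c1 ^+ 2)) _ _ _ _ hRc hPc hN hT); ring | (try unfold Pc, Rc, Tm, Nc, qXi, Cx0, Cx1, A11, A33 in * ); apply: (@cz4 _ c2 _ _ (((-1) * a1 * c0 * c1 + (-1) * a1 * c1 ^+ 2 + (-1) * c0 * c1 + (-1) * c1 ^+ 2 + (-1) * c1 ^+ 2 * m)) (0) (0) (0) (0) _ _ _ _ hRc hPc hN hT); ring].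
    - apply: (mulfI hA); rewrite !mulrA hlam !mul1r /t !embF.
      do 4 rewrite ?emb_mul ?emb_add ?emb_frob.
      apply: emb_eq; [(try unfold Pc, Rc, Tm, Nc, qXi, Cx0, Cx1, A11, A33 in * ); apply: (@cz4 _ c2 _ _ (((-1) * a0 + (-1) * a0 * a1 + (-2) * a0 * a1 * c0 * c1 + (-1) * a0 * a1 * c0 ^+ 2 + (-1) * a0 * a1 * c1 ^+ 2 + (-1) * a0 * a1 * c1 ^+ 2 * n + (-2) * a0 * c0 * c1 + (-1) * a0 * c0 ^+ 2 + (-1) * a0 * c1 ^+ 2 + (-1) * a0 * c1 ^+ 2 * n + (-1) * a1 + (-10) * a1 * c0 * c1 + (-2) * a1 * c0 * c1 * m + (-1) * a1 * c0 * c1 * m * n + (-9) * a1 * c0 * c1 * n + (-5) * a1 * c0 ^+ 2 + (-1) * a1 * c0 ^+ 2 * m + (-1) * a1 * c0 ^+ 2 * n + (-5) * a1 * c1 ^+ 2 + (-1) * a1 * c1 ^+ 2 * m + (-1) * a1 * c1 ^+ 2 * m * n + (-9) * a1 * c1 ^+ 2 * n + (-3) * a1 * c1 ^+ 2 * n ^+ 2 + (-1) * a1 * n + (-1) * a1 ^+ 2 + (-4) * a1 ^+ 2 * c0 * c1 + (-4) * a1 ^+ 2 * c0 * c1 * n + (-2) * a1 ^+ 2 * c0 ^+ 2 + (-1) * a1 ^+ 2 * c0 ^+ 2 * n + (-2) * a1 ^+ 2 * c1 ^+ 2 + (-4) * a1 ^+ 2 * c1 ^+ 2 * n + (-2) *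 a1 ^+ 2 * c1 ^+ 2 * n ^+ 2 + (-1) * a1 ^+ 2 * n + (-6) * c0 * c1 + (-4) * c0 * c1 * m + (-1) * c0 * c1 * m * n + (-2) * c0 * c1 * m ^+ 2 + (-5) * c0 * c1 * n + (-3) * c0 ^+ 2 + (-2) * c0 ^+ 2 * m + (-1) * c0 ^+ 2 * m ^+ 2 + (-3) * c1 ^+ 2 + (-2) * c1 ^+ 2 * m + (-2) * c1 ^+ 2 * m * n + (-1) * c1 ^+ 2 * m ^+ 2 + (-1) * c1 ^+ 2 * m ^+ 2 * n + (-5) * c1 ^+ 2 * n + (-2) * c1 ^+ 2 * n ^+ 2 + (-1) * m + (-1) * m ^+ 2 + (-1) * n)) (((1) + a1)) (0) ((a0 + a0 * a1 + a1 + a1 ^+ 2 + a1 ^+ 2 * n + m + m ^+ 2)) (((1) + c0 * c1 + c1 ^+ 2 + c1 ^+ 2 * n)) _ _ _ _ hRc hPc hN hT); ring | (try unfold Pc, Rc, Tm, Nc, qXi, Cx0, Cx1, A11, A33 in * ); apply: (@cz4 _ c2 _ _ (((-2) * a1 * c0 * c1 + (-1) * a1 * c0 * c1 * n + (-1) * a1 * c0 ^+ 2 + (-1) * a1 * c1 ^+ 2 + (-1) * a1 * c1 ^+ 2 * n + (-2) * c0 * c1 + (-2) * c0 * c1 * m + (-1) * c0 * c1 * n + (-1) * c0 ^+ 2 + (-1) * c0 ^+ 2 * m + (-1) * c1 ^+ 2 + (-1) * c1 ^+ 2 * m + (-1) * c1 ^+ 2 * n)) (0) (0) (0) (0) _ _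 _ _ hRc hPc hN hT); ring].
move=> i j nij; rewrite !fe !mxE.
case: i nij => [[|[|[|[|i]]]] Hi] //=; case: j => [[|[|[|[|j]]]] Hj] //= _.
    - apply: (mulfI hA); rewrite !mulrDr !mulrA hlam !mul1r /t !embF.
      do 4 rewrite ?emb_mul ?emb_add ?emb_frob.
      apply: emb_eq; [(try unfold Pc, Rc, Tm, Nc, qXi, Cx0, Cx1, A11, A33 in * ); apply: (@cz4 _ c2 _ _ (((-1) * a1 * m + (-1) * m)) (0) (0) (0) (0) _ _ _ _ hRc hPc hN hT); ring | (try unfold Pc, Rc, Tm, Nc, qXi, Cx0, Cx1, A11, A33 in * ); apply: (@cz4 _ c2 _ _ (((-1) + (-1) * a1)) (0) (0) (0) (0) _ _ _ _ hRc hPc hN hT); ring].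
    - apply: (mulfI hA); rewrite !mulrDr !mulrA hlam !mul1r /t !embF.
      do 4 rewrite ?emb_mul ?emb_add ?emb_frob.
      apply: emb_eq; [(try unfold Pc, Rc, Tm, Nc, qXi, Cx0, Cx1, A11, A33 in * ); apply: (@cz4 _ c2 _ _ (((-2) * a1 * c0 + (-2) * a1 * c1 + (-1) * a1 * c1 * m + (-1) * a1 ^+ 2 * c0 + (-1) * a1 ^+ 2 * c1 + (-1) * c0 + (-1) * c1 + (-1) * c1 * m)) (0) (0) (0) (0) _ _ _ _ hRc hPc hN hT); ring | (try unfold Pc, Rc, Tm, Nc, qXi, Cx0, Cx1, A11, A33 in * ); apply: (@cz4 _ c2 _ _ (((-1) * a1 * c1 + (-1) * c1)) (0) (0) (0) (0) _ _ _ _ hRc hPc hN hT); ring].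
    - apply: (mulfI hA); rewrite !mulrDr !mulrA hlam !mul1r /t !embF.
      do 4 rewrite ?emb_mul ?emb_add ?emb_frob.
      apply: emb_eq; [(try unfold Pc, Rc, Tm, Nc, qXi, Cx0, Cx1, A11, A33 in * ); apply: (@cz4 _ c2 _ _ (((-2) * a1 * c0 + (-1) * a1 * c0 * m + (-2) * a1 * c1 + (-1) * a1 * c1 * m + (-2) * a1 * c1 * n + (-1) * a1 ^+ 2 * c0 + (-1) * a1 ^+ 2 * c1 + (-1) * a1 ^+ 2 * c1 * n + (-1) * c0 + (-1) * c0 * m + (-1) * c1 + (-1) * c1 * m + (-1) * c1 * n)) (0) (0) (0) (0) _ _ _ _ hRc hPc hN hT); ring | (try unfold Pc, Rc, Tm, Nc, qXi, Cx0, Cx1, A11, A33 in * ); apply: (@cz4 _ c2 _ _ (((-1) * a1 * c0 + (-1) * a1 * c1 + (-1) * c0 + (-1) * c1)) (0) (0) (0) (0) _ _ _ _ hRc hPc hN hT); ring].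
    - apply: (mulfI hA); rewrite !mulrDr !mulrA hlam !mul1r /t !embF.
      do 4 rewrite ?emb_mul ?emb_add ?emb_frob.
      apply: emb_eq; [(try unfold Pc, Rc, Tm, Nc, qXi, Cx0, Cx1, A11, A33 in * ); apply: (@cz4 _ c2 _ _ (((-1) * a1 * m + (-1) * m)) (0) (0) (0) (0) _ _ _ _ hRc hPc hN hT); ring | (try unfold Pc, Rc, Tm, Nc, qXi, Cx0, Cx1, A11, A33 in * ); apply: (@cz4 _ c2 _ _ (((-1) + (-1) * a1)) (0) (0) (0) (0) _ _ _ _ hRc hPc hN hT); ring].
    - apply: (mulfI hA); rewrite !mulrDr !mulrA hlam !mul1r /t !embF.
      do 4 rewrite ?emb_mul ?emb_add ?emb_frob.
      apply: emb_eq; [(try unfold Pc, Rc, Tm, Nc, qXi, Cx0, Cx1, A11, A33 in * ); apply: (@cz4 _ c2 _ _ (((-1) * a1 * c0 * m + (-1) * a1 * c1 * m + (-1) * c0 * m + (-2) * c1 * m + (-1) * c1 * m ^+ 2 + c1 * n)) (0) (0) (0) (0) _ _ _ _ hRc hPc hN hT); ring | (try unfold Pc, Rc, Tm, Nc, qXi, Cx0, Cx1, A11, A33 in * ); apply: (@cz4 _ c2 _ _ (((-1) * a1 * c0 + (-1) * a1 * c1 + (-1) * c0 + (-1) * c1 + (-2) * c1 * m)) (0) (0) (0) (0) _ _ _ _ hRc hPc hN hT); ring].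
    - apply: (mulfI hA); rewrite !mulrDr !mulrA hlam !mul1r /t !embF.
      do 4 rewrite ?emb_mul ?emb_add ?emb_frob.
      apply: emb_eq; [(try unfold Pc, Rc, Tm, Nc, qXi, Cx0, Cx1, A11, A33 in * ); apply: (@cz4 _ c2 _ _ (((-1) * a1 * c0 * m + (-1) * a1 * c1 * m + (-1) * a1 * c1 * m * n + (-2) * c0 * m + (-1) * c0 * m ^+ 2 + c0 * n + (-2) * c1 * m + (-1) * c1 * m * n + (-1) * c1 * m ^+ 2 + c1 * n)) (0) (0) (0) (0) _ _ _ _ hRc hPc hN hT); ring | (try unfold Pc, Rc, Tm, Nc, qXi, Cx0, Cx1, A11, A33 in * ); apply: (@cz4 _ c2 _ _ (((-1) * a1 * c0 + (-1) * a1 * c1 + (-1) * a1 * c1 * n + (-1) * c0 + (-2) * c0 * m + (-1) * c1 + (-2) * c1 * m + (-1) * c1 * n)) (0) (0) (0) (0) _ _ _ _ hRc hPc hN hT); ring].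
    - apply: (mulfI hA); rewrite !mulrDr !mulrA hlam !mul1r /t !embF.
      do 4 rewrite ?emb_mul ?emb_add ?emb_frob.
      apply: emb_eq; [(try unfold Pc, Rc, Tm, Nc, qXi, Cx0, Cx1, A11, A33 in * ); apply: (@cz4 _ c2 _ _ (((-2) * a1 * c0 + (-2) * a1 * c1 + (-1) * a1 * c1 * m + (-1) * a1 ^+ 2 * c0 + (-1) * a1 ^+ 2 * c1 + (-1) * c0 + (-1) * c1 + (-1) * c1 * m)) (0) (0) (0) (0) _ _ _ _ hRc hPc hN hT); ring | (try unfold Pc, Rc, Tm, Nc, qXi, Cx0, Cx1, A11, A33 in * ); apply: (@cz4 _ c2 _ _ (((-1) * a1 * c1 + (-1) * c1)) (0) (0) (0) (0) _ _ _ _ hRc hPc hN hT); ring].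
    - apply: (mulfI hA); rewrite !mulrDr !mulrA hlam !mul1r /t !embF.
      do 4 rewrite ?emb_mul ?emb_add ?emb_frob.
      apply: emb_eq; [(try unfold Pc, Rc, Tm, Nc, qXi, Cx0, Cx1, A11, A33 in * ); apply: (@cz4 _ c2 _ _ (((-1) * a1 * c0 * m + (-1) * a1 * c1 * m + (-1) * c0 * m + (-2) * c1 * m + (-1) * c1 * m ^+ 2 + c1 * n)) (0) (0) (0) (0) _ _ _ _ hRc hPc hN hT); ring | (try unfold Pc, Rc, Tm, Nc, qXi, Cx0, Cx1, A11, A33 in * ); apply: (@cz4 _ c2 _ _ (((-1) * a1 * c0 + (-1) * a1 * c1 + (-1) * c0 + (-1) * c1 + (-2) * c1 * m)) (0) (0) (0) (0) _ _ _ _ hRc hPc hN hT); ring].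
    - apply: (mulfI hA); rewrite !mulrDr !mulrA hlam !mul1r /t !embF.
      do 4 rewrite ?emb_mul ?emb_add ?emb_frob.
      apply: emb_eq; [(try unfold Pc, Rc, Tm, Nc, qXi, Cx0, Cx1, A11, A33 in * ); apply: (@cz4 _ c2 _ _ (((-6) * a1 * c0 * c1 + (-3) * a1 * c0 * c1 * m + (-2) * a1 * c0 * c1 * n + (-3) * a1 * c0 ^+ 2 + (-1) * a1 * c0 ^+ 2 * m + (-3) * a1 * c1 ^+ 2 + (-2) * a1 * c1 ^+ 2 * m + (-1) * a1 * c1 ^+ 2 * m * n + (-3) * a1 * c1 ^+ 2 * n + (-2) * a1 ^+ 2 * c0 * c1 + (-1) * a1 ^+ 2 * c0 * c1 * n + (-1) * a1 ^+ 2 * c0 ^+ 2 + (-1) * a1 ^+ 2 * c1 ^+ 2 + (-1) * a1 ^+ 2 * c1 ^+ 2 * n + (-4) * c0 * c1 + (-4) * c0 * c1 * m + (-1) * c0 * c1 * m ^+ 2 + (-2) * c0 ^+ 2 + (-1) * c0 ^+ 2 * m + (-2) * c1 ^+ 2 + (-3) * c1 ^+ 2 * m + (-1) * c1 ^+ 2 * m * n + (-1) * c1 ^+ 2 * m ^+ 2 + (-1) * c1 ^+ 2 * n)) (0) (0) (((1) + a1)) (0) _ _ _ _ hRc hPc hN hT); ring | (try unfold Pc, Rc, Tm, Nc, qXi, Cx0, Cx1, A11, A33 in * ); apply: (@cz4 _ c2 _ _ (((-3) * a1 * c0 * c1 + (-1) * a1 * c0 ^+ 2 + (-2) * a1 *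 c1 ^+ 2 + (-1) * a1 * c1 ^+ 2 * n + (-3) * c0 * c1 + (-2) * c0 * c1 * m + (-1) * c0 ^+ 2 + (-2) * c1 ^+ 2 + (-2) * c1 ^+ 2 * m + (-1) * c1 ^+ 2 * n)) (0) (0) (0) (0) _ _ _ _ hRc hPc hN hT); ring].
    - apply: (mulfI hA); rewrite !mulrDr !mulrA hlam !mul1r /t !embF.
      do 4 rewrite ?emb_mul ?emb_add ?emb_frob.
      apply: emb_eq; [(try unfold Pc, Rc, Tm, Nc, qXi, Cx0, Cx1, A11, A33 in * ); apply: (@cz4 _ c2 _ _ (((-2) * a1 * c0 + (-1) * a1 * c0 * m + (-2) * a1 * c1 + (-1) * a1 * c1 * m + (-2) * a1 * c1 * n + (-1) * a1 ^+ 2 * c0 + (-1) * a1 ^+ 2 * c1 + (-1) * a1 ^+ 2 * c1 * n + (-1) * c0 + (-1) * c0 * m + (-1) * c1 + (-1) * c1 * m + (-1) * c1 * n)) (0) (0) (0) (0) _ _ _ _ hRc hPc hN hT); ring | (try unfold Pc, Rc, Tm, Nc, qXi, Cx0, Cx1, A11, A33 in * ); apply: (@cz4 _ c2 _ _ (((-1) * a1 * c0 + (-1) * a1 * c1 + (-1) * c0 + (-1) * c1)) (0) (0) (0) (0) _ _ _ _ hRc hPc hN hT); ring].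
    - apply: (mulfI hA); rewrite !mulrDr !mulrA hlam !mul1r /t !embF.
      do 4 rewrite ?emb_mul ?emb_add ?emb_frob.
      apply: emb_eq; [(try unfold Pc, Rc, Tm, Nc, qXi, Cx0, Cx1, A11, A33 in * ); apply: (@cz4 _ c2 _ _ (((-1) * a1 * c0 * m + (-1) * a1 * c1 * m + (-1) * a1 * c1 * m * n + (-2) * c0 * m + (-1) * c0 * m ^+ 2 + c0 * n + (-2) * c1 * m + (-1) * c1 * m * n + (-1) * c1 * m ^+ 2 + c1 * n)) (0) (0) (0) (0) _ _ _ _ hRc hPc hN hT); ring | (try unfold Pc, Rc, Tm, Nc, qXi, Cx0, Cx1, A11, A33 in * ); apply: (@cz4 _ c2 _ _ (((-1) * a1 * c0 + (-1) * a1 * c1 + (-1) * a1 * c1 * n + (-1) * c0 + (-2) * c0 * m + (-1) * c1 + (-2) * c1 * m + (-1) * c1 * n)) (0) (0) (0) (0) _ _ _ _ hRc hPc hN hT); ring].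
    - apply: (mulfI hA); rewrite !mulrDr !mulrA hlam !mul1r /t !embF.
      do 4 rewrite ?emb_mul ?emb_add ?emb_frob.
      apply: emb_eq; [(try unfold Pc, Rc, Tm, Nc, qXi, Cx0, Cx1, A11, A33 in * ); apply: (@cz4 _ c2 _ _ (((-6) * a1 * c0 * c1 + (-3) * a1 * c0 * c1 * m + (-2) * a1 * c0 * c1 * n + (-3) * a1 * c0 ^+ 2 + (-1) * a1 * c0 ^+ 2 * m + (-3) * a1 * c1 ^+ 2 + (-2) * a1 * c1 ^+ 2 * m + (-1) * a1 * c1 ^+ 2 * m * n + (-3) * a1 * c1 ^+ 2 * n + (-2) * a1 ^+ 2 * c0 * c1 + (-1) * a1 ^+ 2 * c0 * c1 * n + (-1) * a1 ^+ 2 * c0 ^+ 2 + (-1) * a1 ^+ 2 * c1 ^+ 2 + (-1) * a1 ^+ 2 * c1 ^+ 2 * n + (-4) * c0 * c1 + (-4) * c0 * c1 * m + (-1) * c0 * c1 * m ^+ 2 + (-2) * c0 ^+ 2 + (-1) * c0 ^+ 2 * m + (-2) * c1 ^+ 2 + (-3) * c1 ^+ 2 * m + (-1) * c1 ^+ 2 * m * n + (-1) * c1 ^+ 2 * m ^+ 2 + (-1) * c1 ^+ 2 * n)) (0) (0) (((1) + a1)) (0) _ _ _ _ hRc hPc hN hT); ring | (try unfold Pc, Rc, Tm, Nc, qXi, Cx0, Cx1, A11, A33 in * ); apply: (@cz4 _ c2 _ _ (((-3) * a1 * c0 * c1 + (-1) * a1 * c0 ^+ 2 + (-2) * a1 *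 c1 ^+ 2 + (-1) * a1 * c1 ^+ 2 * n + (-3) * c0 * c1 + (-2) * c0 * c1 * m + (-1) * c0 ^+ 2 + (-2) * c1 ^+ 2 + (-2) * c1 ^+ 2 * m + (-1) * c1 ^+ 2 * n)) (0) (0) (0) (0) _ _ _ _ hRc hPc hN hT); ring].
Qed.
End Core.


Lemma frob2 (R : comRingType) (c2 : (1 + 1 : R) = 0) (x y : R) : (x + y) ^+ 2 = x ^+ 2 + y ^+ 2.
Proof. rewrite !expr2; (try unfold Pc, Rc, Tm, Nc, qXi, Cx0, Cx1, A11, A33 in * ); apply: (@cz0 _ c2 _ _ ((x * y))  ); ring. Qed.

Lemma frobk (R : comRingType) (c2 : (1 + 1 : R) = 0) k (x y : R) :
  (x + y) ^+ (2 ^ k) = x ^+ (2 ^ k) + y ^+ (2 ^ k).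
Proof.
elim: k x y => [|k IH] x y; first by rewrite !expr1.
by rewrite expnS !exprM frob2 // IH.
Qed.

Lemma sumsq (R : comRingType) (c2 : (1 + 1 : R) = 0) k (f : nat -> R) :
  (\sum_(i < k) f i) ^+ 2 = \sum_(i < k) f i ^+ 2.
Proof.
elim: k => [|k IH]; first by rewrite !big_ord0 expr2 mulr0.
by rewrite !big_ord_recr /= frob2 // IH.
Qed.

Section Count.
Variable F : finFieldType.
Hypothesis c2 : (1 + 1 : F) = 0.

Lemma countL (x y : F) : (forall m, x != m ^+ 2 + m) -> (forall m, y != m ^+ 2 + m) ->
  exists m, x + y = m ^+ 2 + m.
Proof.
move=> hx hy.
pose phi (m : F) := m ^+ 2 + m.
pose H := [set phi m | m : F].
have fib : forall m0 m, (phi m == phi m0) = (m == m0) || (m == m0 + 1).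
  move=> m0 m; apply/eqP/orP => [e|].
    have e' : phi m - phi m0 = 0 by rewrite e subrr.
    have : (m + m0) * (m + m0 + 1) = 0 by rewrite /phi in e'; (try unfold Pc, Rc, Tm, Nc, qXi, Cx0, Cx1, A11, A33 in * ); apply: (@cz1 _ c2 _ _ ((m * m0 + m0 + m0 ^+ 2)) (((1))) _ e'); ring.
    move/eqP; rewrite mulf_eq0 => /orP [] /eqP h; [left | right]; apply/eqP.
      (try unfold Pc, Rc, Tm, Nc, qXi, Cx0, Cx1, A11, A33 in * ); apply: (@cz1 _ c2 _ _ (((-1) * m0)) (((1))) _ h); ring.
    (try unfold Pc, Rc, Tm, Nc, qXi, Cx0, Cx1, A11, A33 in * ); apply: (@cz1 _ c2 _ _ (((-1) + (-1) * m0)) (((1))) _ h); ring.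
  by case=> /eqP ->; rewrite // /phi; (try unfold Pc, Rc, Tm, Nc, qXi, Cx0, Cx1, A11, A33 in * ); apply: (@cz0 _ c2 _ _ (((1) + m0))  ); ring.
have neq : forall m0 : F, m0 != m0 + 1.
  move=> m0; apply/eqP => h.
  have : (1 : F) = (m0 + 1) - m0 by ring.
  by rewrite -h subrr => /eqP; rewrite oner_eq0.
have hF : #|F| = (#|H| * 2)%N.
  have -> : (#|H| * 2)%N = (\sum_(h in H) 2)%N by rewrite sum_nat_const.
  rewrite -sum1_card (partition_big phi (mem H)) /=; last by move=> i _; apply: imset_f.
  apply: eq_bigr => h /imsetP [m0 _ ->].
  rewrite (eq_bigl (mem [set m0; m0 + 1])); first by rewrite sum1_card cards2 neq.
  by move=> i; rewrite !inE fib.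
pose xH := [set x + h | h in H].
have cxH : #|xH| = #|H| by apply: card_imset; apply: addrI.
have dis : H :&: xH = set0.
  apply/setP => z; rewrite !inE; apply/negbTE/negP.
  case/andP => /imsetP [a _ ->] /imsetP [h /imsetP [b _ ->] e].
  have e' : phi a - (x + phi b) = 0 by rewrite e subrr.
  have : x = phi (a + b) by rewrite /phi in e' *; (try unfold Pc, Rc, Tm, Nc, qXi, Cx0, Cx1, A11, A33 in * ); apply: (@cz1 _ c2 _ _ (((-1) * a * b + (-1) * b + (-1) * b ^+ 2)) (((-1))) _ e'); ring.
  by move/eqP; rewrite (negbTE (hx _)).
have hU : H :|: xH = setT.
  apply/eqP; rewrite eqEcard subsetT cardsT cardsU dis cards0 subn0 cxH.
  by rewrite hF muln2 -addnn leqnn.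
have : y \in H :|: xH by rewrite hU inE.
rewrite inE => /orP [/imsetP [m _ e] | /imsetP [h /imsetP [m _ ->] e]].
  by move: (hy m); rewrite e eqxx.
exists m.
have e' : y - (x + phi m) = 0 by rewrite e subrr.
rewrite /phi in e' *; (try unfold Pc, Rc, Tm, Nc, qXi, Cx0, Cx1, A11, A33 in * ); apply: (@cz1 _ c2 _ _ ((x)) (((1))) _ e'); ring.
Qed.
End Count.

Lemma oppK2 (R : comRingType) (c2 : (1 + 1 : R) = 0) (z : R) : - z = z.
Proof. apply/eqP; rewrite eq_sym -addr_eq0 -[z]mul1r -mulrDl c2 mul0r. by []. Qed.

Lemma inAX (F : finFieldType) (K : fieldExtType F) (x : F) k : (x%:A : K) ^+ k = (x ^+ k)%:A.
Proof.
elim: k => [|k IH]; first by rewrite !expr0 scale1r.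
by rewrite !exprS IH -inAM.
Qed.

Theorem lemma6 (h : nat) (F : finFieldType) (K : fieldExtType F)
    (nu : F) (eps : K) (a0 a1 b0 b1 c0 c1 : F) (d e f : K) :
  (0 < h)%N ->
  #|F| = (2 ^ h)%N ->
  \dim {:K} = 2%N ->
  nu != 1 ->
  \sum_(i < h) nu ^+ (2 ^ i) = 1 ->
  (forall x : F, eps != x%:A) ->
  eps ^+ 2 + eps + nu%:A = 0 ->
  let q := (2 ^ h)%N in
  let a := a0%:A + a1%:A * eps in
  let b := b0%:A + b1%:A * eps in
  let c := c0%:A + c1%:A * eps in
  hyperbolic_quadric (Q_mx a b c d e f) ->
  (forall v : 'rV[K]_4, v != 0 -> pcoord v 0 = 0 -> herm_eval q v = 0 ->
     qform (Q_mx a b c d e f) v = 0 -> exists mu : K, v = mu *: P_inf K) ->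
  qf_rank_is (Xi_mx nu a0 a1 b0 b1 c0 c1) 2 ->
  conj_planes_pair K q (Xi_mx nu a0 a1 b0 b1 c0 c1) /\
  points_form_line (Xi_mx nu a0 a1 b0 b1 c0 c1).
Proof.
move=> h0 hF _ _ htr hepsF he q a b c _ hH [hex _].
have p2 : 2 \in [pchar F] by apply: (card_finPcharP hF).
have c2 : (1 + 1 : F) = 0 by rewrite -mulr2n (pcharf0 p2).
have c2K : (1 + 1 : K) = 0.
  by rewrite -[1 : K]scale1r -scalerDl c2 scale0r.
have hqF : forall x : F, x ^+ q = x by move=> x; rewrite /q -hF expf_card.
have hqD : forall x y : K, (x + y) ^+ q = x ^+ q + y ^+ q by move=> x y; apply: (frobk _ c2K).
have eps2 : eps ^+ 2 = eps + nu%:A.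
  have h1 : eps ^+ 2 = - (eps + nu%:A) by apply/eqP; rewrite -addr_eq0 addrA he.
  by rewrite h1 (oppK2 _ c2K).
have claim : forall k, eps ^+ (2 ^ k) = eps + (\sum_(i < k) nu ^+ (2 ^ i))%:A.
  elim=> [|k IH]; first by rewrite big_ord0 scale0r addr0 expr1.
  rewrite expnSr exprM IH (frob2 _ c2K) eps2 inAX (sumsq _ c2 k (fun j => nu ^+ (2 ^ j))) big_ord_recl /= expr1.
  rewrite scalerDl addrA; congr (_ + _%:A); apply: eq_bigr => i _.
  by rewrite -exprM expnS mulnC.
have hqe : eps ^+ q = eps + 1 by rewrite /q claim htr scale1r.
have hnuH : forall m : F, nu != m ^+ 2 + m.
  move=> m; apply/eqP => hm; move: htr.
  have -> : \sum_(i < h) nu ^+ (2 ^ i) = \sum_(i < h) (m ^+ (2 ^ i.+1) - m ^+ (2 ^ i)).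
    by apply: eq_bigr => i _; rewrite hm (frobk _ c2) -exprM -expnS (oppK2 _ c2).
  rewrite -(big_mkord xpredT (fun i => m ^+ (2 ^ i.+1) - m ^+ (2 ^ i))).
  rewrite telescope_sumr // expn0 expr1 hqF subrr => /eqP.
  by rewrite eq_sym oner_eq0.
exact: (@core F K nu eps q a0 a1 b0 b1 c0 c1 c2 he hepsF hqF hqD hqe hnuH (@countL F c2) d e f hH hex).
Qed.
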